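(* Let $\lambda \geq 1$, $\mu \geq 0$, $\delta \geq 0$, $t\in\left(\tfrac12,1\right)$ and $\xi=\frac{2\lambda+\mu}{2\lambda+1}$. Let $f(z)=z+\sum_{n=2}^{\infty}a_n z^n$ belong to the class $\mathscr{B}_{\Sigma}^{\mu}(\lambda,\delta,t)$ defined below. Then \[ |a_{2}|\leq \frac{2t\sqrt{2t}}{\sqrt{\left|(\lambda+\mu+2\xi\delta)^{2}-2\left[2(\lambda+\mu +2\xi\delta)^{2}- (2\lambda + \mu)(\mu+1)-12 \xi\delta\right]t^{2}\right|}} \] and \[ |a_{3}|\leq \frac{4t^{2}}{(\lambda + \mu +2\xi\delta )^{2}}+\frac{2t}{2\lambda+\mu +6\xi\delta}. \]
   Context: Let $\mathbb{U}=\{z\in\mathbb{C}:|z|<1\}$ and let $\mathcal{A}$ be the class of analytic functions $f$ on $\mathbb{U}$ with $f(0)=0$, $f'(0)=1$, i.e. $f(z)=z+\sum_{n\ge2}a_nz^n$. A function $f\in\mathcal{A}$ is bi-univalent if $f$ is univalent on $\mathbb{U}$ and its inverse $g=f^{-1}$ (defined near $0$, with $f^{-1}(f(z))=z$, and $g(w)=w-a_2w^2+(2a_2^2-a_3)w^3-\cdots$) extends to a univalent function on $\mathbb{U}$; $\Sigma$ denotes the class of such $f$. For analytic $F,G$ on $\mathbb{U}$, $F\prec G$ (subordination) means there is an analytic $\omega$ on $\mathbb{U}$ with $\omega(0)=0$, $|\omega(z)|<1$ and $F=G\circ\omega$. The Chebyshev polynomials of the second kind are $U_0(t)=1$, $U_1(t)=2t$,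 $U_{n+1}(t)=2tU_n(t)-U_{n-1}(t)$, with generating function $H(z,t)=\frac{1}{1-2tz+z^2}=\sum_{n\ge0}U_n(t)z^n$. For $\lambda\ge1,\mu\ge0,\delta\ge0$, $t\in(\frac12,1)$ and $\xi=\frac{2\lambda+\mu}{2\lambda+1}$, the class $\mathscr{B}_{\Sigma}^{\mu}(\lambda,\delta,t)$ consists of all $f\in\Sigma$ such that, with $g=f^{-1}$, \[ (1-\lambda)\left(\tfrac{f(z)}{z}\right)^{\mu}+\lambda f'(z)\left(\tfrac{f(z)}{z}\right)^{\mu-1}+\xi\delta z f''(z)\prec H(z,t) \] and \[ (1-\lambda)\left(\tfrac{g(w)}{w}\right)^{\mu}+\lambda g'(w)\left(\tfrac{g(w)}{w}\right)^{\mu-1}+\xi\delta w g''(w)\prec H(w,t), \] where powers are taken with the principal branch equal to $1$ at the origin. *)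

(* Defs.v *)
From Stdlib Require Import Reals.
From Coquelicot Require Import Coquelicot.
Open Scope C_scope.

Definition inU (z : C) : Prop := (Cmod z < 1)%R.

Definition Cexp (z : C) : C :=
  ((exp (Re z) * cos (Im z))%R, (exp (Re z) * sin (Im z))%R).

Definition taylor_on_U (h : C -> C) (c : nat -> C) : Prop :=
  forall z, inU z -> @is_series C_AbsRing C_NormedModule (fun n => c n * z ^ n) (h z).

Definition analytic_U (h : C -> C) : Prop := exists c, taylor_on_U h c.

Definition Cderiv_at (h : C -> C) (z l : C) : Prop :=
  @is_derive C_AbsRing C_NormedModule h z l.

Definition univalent_U (h : C -> C) : Prop :=
  forall z w, inU z -> inU w -> h z = h w -> z = w.

Definition in_A (f : C -> C) (a : nat -> C) : Prop :=
  taylor_on_U f a /\ a 0%nat = 0 /\ a 1%nat = 1.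

Definition local_inverse (f g : C -> C) : Prop :=
  exists r : R, (0 < r)%R /\
    forall w, (Cmod w < r)%R -> inU (g w) /\ f (g w) = w.

Definition bi_univalent (f : C -> C) : Prop :=
  univalent_U f /\
  exists g, local_inverse f g /\ analytic_U g /\ univalent_U g.

Definition subordinate (F G : C -> C) : Prop :=
  exists om : C -> C, analytic_U om /\ om 0 = 0 /\
    (forall z, inU z -> inU (om z)) /\
    (forall z, inU z -> F z = G (om z)).

(* generating function of Chebyshev polynomials of the 2nd kind *)
Definition Hcheb (t : R) (z : C) : C := / (1 - 2 * RtoC t * z + z * z).

Definition xi (lam mu : R) : R := ((2 * lam + mu) / (2 * lam + 1))%R.

(* The subordination condition for h (= f or g):
   (1-lam)(h z/z)^mu + lam h'(z) (h z/z)^(mu-1) + xi delta z h''(z) < H(z,t),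
   where (h z / z)^s := exp(s L(z)), L the analytic branch of log(h(z)/z)
   on U with L(0) = 0. *)
Definition op_subord (lam mu del t : R) (h : C -> C) : Prop :=
  exists L h1 h2 : C -> C,
    analytic_U L /\ L 0 = 0 /\
    (forall z, inU z -> z <> 0 -> Cexp (L z) = h z / z) /\
    (forall z, inU z -> Cderiv_at h z (h1 z) /\ Cderiv_at h1 z (h2 z)) /\
    subordinate
      (fun z => (1 - RtoC lam) * Cexp (RtoC mu * L z)
                + RtoC lam * h1 z * Cexp ((RtoC mu - 1) * L z)
                + RtoC (xi lam mu) * RtoC del * z * h2 z)
      (Hcheb t).

Definition classB (mu lam del t : R) (f : C -> C) : Prop :=
  bi_univalent f /\
  op_subord lam mu del t f /\
  exists g, local_inverse f g /\ analytic_U g /\ univalent_U g /\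
            op_subord lam mu del t g.

(* Main.v *)
Require Import Defs.
From Stdlib Require Import Reals Lra Lia Psatz.
From Coquelicot Require Import Coquelicot.

Open Scope R_scope.

Lemma sum_n_norm_le {K : AbsRing} {V : NormedModule K} (a : nat -> V) (b : nat -> R) :
  (forall n, norm (a n) <= b n) -> forall N, norm (sum_n a N) <= sum_n b N.
Proof.
  intros H N; induction N.
  - rewrite !sum_O; auto.
  - rewrite !sum_Sn. eapply Rle_trans; [apply norm_triangle|].
    change (plus (sum_n b N) (b (S N))) with (sum_n b N + b (S N)).
    specialize (H (S N)); lra.
Qed.

Lemma series_norm_le {K : AbsRing} {V : NormedModule K} (a : nat -> V) (b : nat -> R) l L :
  is_series a l -> is_series b L -> (forall n, norm (a n) <= b n) -> norm l <= L.
Proof.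
  intros Ha Hb H.
  assert (H1 : is_lim_seq (fun N => norm (sum_n a N)) (norm l)).
  { unfold is_lim_seq. eapply filterlim_comp; [apply Ha| apply filterlim_norm]. }
  assert (H2 : is_lim_seq (sum_n b) L) by exact Hb.
  pose proof (is_lim_seq_le _ _ _ _ (sum_n_norm_le a b H) H1 H2) as HH.
  exact HH.
Qed.

Lemma sum_n_nonneg (b : nat -> R) : (forall n, 0 <= b n) -> forall N, 0 <= sum_n b N.
Proof.
  intros H N; induction N.
  - rewrite sum_O; auto.
  - rewrite sum_Sn. change (plus (sum_n b N) (b (S N))) with (sum_n b N + b (S N)).
    specialize (H (S N)); lra.
Qed.

Lemma sum_n_elem_le (b : nat -> R) : (forall n, 0 <= b n) -> forall N n, (n <= N)%nat -> b n <= sum_n b N.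
Proof.
  intros H N; induction N; intros n Hn.
  - rewrite sum_O. replace n with 0%nat by lia. lra.
  - rewrite sum_Sn. change (plus (sum_n b N) (b (S N))) with (sum_n b N + b (S N)).
    destruct (Nat.eq_dec n (S N)) as [->|Hne].
    + pose proof (sum_n_nonneg b H N). lra.
    + pose proof (IHN n ltac:(lia)). pose proof (H (S N)). lra.
Qed.

Lemma series_terms_bounded {K : AbsRing} {V : NormedModule K} (a : nat -> V) l :
  is_series a l -> exists M, forall n, norm (a n) <= M.
Proof.
  intros Ha.
  assert (Hev : eventually (fun N => ball_norm l 1 (sum_n a N))).
  { apply Ha. apply locally_le_locally_norm. exists (mkposreal 1 Rlt_0_1). auto. }
  destruct Hev as [N0 HN0].
  exists (2 + sum_n (fun k => norm (a k)) N0). intros n.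
  pose proof (sum_n_nonneg (fun k => norm (a k)) (fun k => norm_ge_0 _) N0).
  destruct (Compare_dec.le_lt_dec n N0) as [Hle|Hlt].
  - pose proof (sum_n_elem_le (fun k => norm (a k)) (fun k => norm_ge_0 _) N0 n Hle). simpl in *. lra.
  - destruct n as [|n]; [lia|].
    assert (E : a (S n) = minus (sum_n a (S n)) (sum_n a n)).
    { rewrite sum_Sn. unfold minus. rewrite plus_comm, plus_assoc, plus_opp_l, plus_zero_l. reflexivity. }
    rewrite E.
    pose proof (HN0 (S n) ltac:(lia)) as B1. pose proof (HN0 n ltac:(lia)) as B2.
    unfold ball_norm in B1, B2.
    rewrite (minus_trans l). eapply Rle_trans; [apply norm_triangle|].
    rewrite <- (norm_opp (minus l _)), opp_minus. lra.
Qed.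

Open Scope C_scope.

Definition Ord (n : nat) (F G : C -> C) : Prop :=
  exists K d, (0 <= K)%R /\ (0 < d)%R /\
    forall z : C, z <> 0 -> (Cmod z < d)%R -> (Cmod (F z - G z) <= K * Cmod z ^ n)%R.

Definition Bnd (F : C -> C) : Prop :=
  exists K d, (0 < d)%R /\ forall z : C, z <> 0 -> (Cmod z < d)%R -> (Cmod (F z) <= K)%R.

Definition Lin (F : C -> C) : Prop :=
  exists K d, (0 <= K)%R /\ (0 < d)%R /\
    forall z : C, z <> 0 -> (Cmod z < d)%R -> (Cmod (F z) <= K * Cmod z)%R.

Lemma pow_le1 (x : R) (n : nat) : (0 <= x <= 1)%R -> (x ^ n <= 1)%R.
Proof. intros H. rewrite <- (pow1 n). apply pow_incr. lra. Qed.

Lemma Cmod_sub_le (x y : C) : (Cmod (x - y) <= Cmod x + Cmod y)%R.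
Proof. unfold Cminus. eapply Rle_trans; [apply Cmod_triangle|]. rewrite Cmod_opp. lra. Qed.

Lemma Cmod_le_sub (x y : C) : (Cmod x <= Cmod (x - y) + Cmod y)%R.
Proof. replace x with ((x - y) + y) at 1 by ring. apply Cmod_triangle. Qed.

Lemma Ord_ext (n : nat) (F F' G G' : C -> C) d0 : (0 < d0)%R ->
  (forall z : C, z <> 0 -> (Cmod z < d0)%R -> F z = F' z /\ G z = G' z) ->
  Ord n F G -> Ord n F' G'.
Proof.
  intros Hd0 He [K [d [HK [Hd H]]]]. exists K, (Rmin d d0). split; [lra|split].
  - apply Rmin_pos; lra.
  - intros z Hz Hzd. pose proof (Rmin_l d d0). pose proof (Rmin_r d d0).
    destruct (He z Hz ltac:(lra)) as [E1 E2]. rewrite <- E1, <- E2. apply H; auto; lra.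
Qed.

Lemma Ord_trans n F G H : Ord n F G -> Ord n G H -> Ord n F H.
Proof.
  intros [K1 [d1 [HK1 [Hd1 H1]]]] [K2 [d2 [HK2 [Hd2 H2]]]].
  exists (K1 + K2)%R, (Rmin d1 d2). split; [lra|split]. apply Rmin_pos; lra.
  intros z Hz Hzd. pose proof (Rmin_l d1 d2). pose proof (Rmin_r d1 d2).
  replace (F z - H z) with ((F z - G z) + (G z - H z)) by ring.
  eapply Rle_trans; [apply Cmod_triangle|].
  specialize (H1 z Hz ltac:(lra)). specialize (H2 z Hz ltac:(lra)). lra.
Qed.

Lemma Ord_sym n F G : Ord n F G -> Ord n G F.
Proof.
  intros [K [d [HK [Hd H]]]]. exists K, d. repeat split; auto.
  intros z Hz Hzd. replace (G z - F z) with (- (F z - G z)) by ring. rewrite Cmod_opp. auto.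
Qed.

Lemma Ord_refl n F : Ord n F F.
Proof.
  exists 0%R, 1%R. repeat split; try lra. intros z _ _. replace (F z - F z) with (RtoC 0) by ring.
  rewrite Cmod_0. lra.
Qed.

Lemma Ord_add n F1 G1 F2 G2 : Ord n F1 G1 -> Ord n F2 G2 ->
  Ord n (fun z => F1 z + F2 z) (fun z => G1 z + G2 z).
Proof.
  intros [K1 [d1 [HK1 [Hd1 H1]]]] [K2 [d2 [HK2 [Hd2 H2]]]].
  exists (K1 + K2)%R, (Rmin d1 d2). split; [lra|split]. apply Rmin_pos; lra.
  intros z Hz Hzd. pose proof (Rmin_l d1 d2). pose proof (Rmin_r d1 d2).
  replace (F1 z + F2 z - (G1 z + G2 z)) with ((F1 z - G1 z) + (F2 z - G2 z)) by ring.
  eapply Rle_trans; [apply Cmod_triangle|].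
  specialize (H1 z Hz ltac:(lra)). specialize (H2 z Hz ltac:(lra)). lra.
Qed.

Lemma Ord_mul n F1 G1 F2 G2 : Ord n F1 G1 -> Ord n F2 G2 -> Bnd F1 -> Bnd G2 ->
  Ord n (fun z => F1 z * F2 z) (fun z => G1 z * G2 z).
Proof.
  intros [K1 [d1 [HK1 [Hd1 H1]]]] [K2 [d2 [HK2 [Hd2 H2]]]] [B1 [e1 [He1 HB1]]] [B2 [e2 [He2 HB2]]].
  set (B1' := Rmax B1 0). set (B2' := Rmax B2 0).
  exists (B1' * K2 + K1 * B2')%R, (Rmin (Rmin d1 d2) (Rmin e1 e2)).
  assert (0 <= B1')%R by apply Rmax_r. assert (0 <= B2')%R by apply Rmax_r.
  split; [nra|split]. repeat apply Rmin_pos; lra.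
  intros z Hz Hzd.
  pose proof (Rmin_l (Rmin d1 d2) (Rmin e1 e2)). pose proof (Rmin_r (Rmin d1 d2) (Rmin e1 e2)).
  pose proof (Rmin_l d1 d2). pose proof (Rmin_r d1 d2). pose proof (Rmin_l e1 e2). pose proof (Rmin_r e1 e2).
  replace (F1 z * F2 z - G1 z * G2 z) with (F1 z * (F2 z - G2 z) + (F1 z - G1 z) * G2 z) by ring.
  eapply Rle_trans; [apply Cmod_triangle|]. rewrite !Cmod_mult.
  specialize (H1 z Hz ltac:(lra)). specialize (H2 z Hz ltac:(lra)).
  specialize (HB1 z Hz ltac:(lra)). specialize (HB2 z Hz ltac:(lra)).
  assert (Cmod (F1 z) <= B1')%R by (eapply Rle_trans; [apply HB1| apply Rmax_l]).
  assert (Cmod (G2 z) <= B2')%R by (eapply Rle_trans; [apply HB2| apply Rmax_l]).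
  pose proof (Cmod_ge_0 (F1 z)). pose proof (Cmod_ge_0 (G2 z)).
  pose proof (Cmod_ge_0 (F2 z - G2 z)). pose proof (Cmod_ge_0 (F1 z - G1 z)).
  assert (0 <= Cmod z ^ n)%R by (apply pow_le; apply Cmod_ge_0).
  assert (Cmod (F1 z) * Cmod (F2 z - G2 z) <= B1' * (K2 * Cmod z ^ n))%R by (apply Rmult_le_compat; auto).
  assert (Cmod (F1 z - G1 z) * Cmod (G2 z) <= (K1 * Cmod z ^ n) * B2')%R by (apply Rmult_le_compat; auto).
  nra.
Qed.

Lemma Ord_exact n F G Q : (forall z : C, F z - G z = z ^ n * Q z) -> Bnd Q -> Ord n F G.
Proof.
  intros HE [B [e [He HB]]]. exists (Rmax B 0), e. split; [apply Rmax_r|split; auto].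
  intros z Hz Hzd. rewrite HE, Cmod_mult, Cmod_pow.
  specialize (HB z Hz Hzd). assert (Cmod (Q z) <= Rmax B 0)%R by (eapply Rle_trans; [apply HB|apply Rmax_l]).
  assert (0 <= Cmod z ^ n)%R by (apply pow_le; apply Cmod_ge_0).
  rewrite Rmult_comm. apply Rmult_le_compat_r; auto.
Qed.

Lemma Bnd_const c : Bnd (fun _ => c).
Proof. exists (Cmod c), 1%R. split; [lra|]. intros; lra. Qed.

Lemma Bnd_id : Bnd (fun z => z).
Proof. exists 1%R, 1%R. split; [lra|]. intros; lra. Qed.

Lemma Bnd_add F G : Bnd F -> Bnd G -> Bnd (fun z => F z + G z).
Proof.
  intros [K1 [d1 [Hd1 H1]]] [K2 [d2 [Hd2 H2]]]. exists (K1 + K2)%R, (Rmin d1 d2).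
  split. apply Rmin_pos; lra. intros z Hz Hzd. pose proof (Rmin_l d1 d2). pose proof (Rmin_r d1 d2).
  eapply Rle_trans; [apply Cmod_triangle|].
  specialize (H1 z Hz ltac:(lra)). specialize (H2 z Hz ltac:(lra)). lra.
Qed.

Lemma Bnd_mul F G : Bnd F -> Bnd G -> Bnd (fun z => F z * G z).
Proof.
  intros [K1 [d1 [Hd1 H1]]] [K2 [d2 [Hd2 H2]]]. exists (Rmax K1 0 * Rmax K2 0)%R, (Rmin d1 d2).
  split. apply Rmin_pos; lra. intros z Hz Hzd. pose proof (Rmin_l d1 d2). pose proof (Rmin_r d1 d2).
  rewrite Cmod_mult.
  specialize (H1 z Hz ltac:(lra)). specialize (H2 z Hz ltac:(lra)).
  apply Rmult_le_compat; try apply Cmod_ge_0.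
  eapply Rle_trans; [apply H1|apply Rmax_l]. eapply Rle_trans; [apply H2|apply Rmax_l].
Qed.

Lemma Bnd_Ord n F G : Ord n F G -> Bnd G -> Bnd F.
Proof.
  intros [K [d [HK [Hd H]]]] [B [e [He HB]]]. exists (K + B)%R, (Rmin (Rmin d e) 1).
  split. repeat apply Rmin_pos; lra. intros z Hz Hzd.
  pose proof (Rmin_l (Rmin d e) 1). pose proof (Rmin_r (Rmin d e) 1).
  pose proof (Rmin_l d e). pose proof (Rmin_r d e).
  specialize (H z Hz ltac:(lra)). specialize (HB z Hz ltac:(lra)).
  assert (Cmod z ^ n <= 1)%R. { apply pow_le1; split; [apply Cmod_ge_0|lra]. }
  pose proof (Cmod_le_sub (F z) (G z)). nra.
Qed.

Lemma Ord_comp n Phi Psi u : Ord n Phi Psi -> Phi 0 = Psi 0 -> Lin u ->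
  Ord n (fun z => Phi (u z)) (fun z => Psi (u z)).
Proof.
  intros [K [d [HK [Hd H]]]] H0 [L [e [HL [He Hu]]]].
  exists (K * (L + 1) ^ n)%R, (Rmin e (d / (L + 1))).
  split. apply Rmult_le_pos; auto. apply pow_le; lra.
  split. apply Rmin_pos; auto. apply Rdiv_lt_0_compat; lra.
  intros z Hz Hzd. pose proof (Rmin_l e (d / (L + 1))). pose proof (Rmin_r e (d / (L + 1))).
  specialize (Hu z Hz ltac:(lra)).
  destruct (Ceq_dec (u z) 0) as [E|E].
  - rewrite E, H0. replace (Psi 0 - Psi 0) with (RtoC 0) by ring. rewrite Cmod_0.
    apply Rmult_le_pos. apply Rmult_le_pos; auto. apply pow_le; lra. apply pow_le, Cmod_ge_0.
  - assert (Cmod z * (L + 1) < d)%R.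
    { assert (Cmod z < d / (L+1))%R by lra. apply (Rmult_lt_compat_r (L+1)) in H3; [|lra].
      unfold Rdiv in H3. rewrite Rmult_assoc, Rinv_l in H3; lra. }
    pose proof (Cmod_ge_0 z).
    assert (Cmod (u z) < d)%R by nra.
    eapply Rle_trans; [apply H; auto|].
    rewrite Rmult_assoc. apply Rmult_le_compat_l; auto.
    rewrite <- Rpow_mult_distr. apply pow_incr. split. apply Cmod_ge_0. nra.
Qed.

Lemma small_zero (A B d : R) : (0 <= A)%R -> (0 < d)%R -> (forall x, 0 < x < d -> A <= B * x)%R -> A = 0%R.
Proof.
  intros HA Hd H. destruct (Req_dec A 0) as [|HA0]; auto. exfalso.
  set (x := Rmin (d/2) (A / (2 * (Rabs B + 1)))).
  pose proof (Rabs_pos B) as HB0.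
  assert (Hq : (0 < A / (2 * (Rabs B + 1)))%R). { apply Rdiv_lt_0_compat; lra. }
  assert (Hx0 : (0 < x)%R) by (apply Rmin_pos; lra).
  assert (Hx1 : (x <= A / (2 * (Rabs B + 1)))%R) by apply Rmin_r.
  assert (Hx2 : (x <= d/2)%R) by apply Rmin_l.
  specialize (H x ltac:(lra)).
  assert (Hx3 : (x * (2 * (Rabs B + 1)) <= A)%R).
  { apply (Rmult_le_compat_r (2 * (Rabs B + 1))) in Hx1; [|lra].
    unfold Rdiv in Hx1. rewrite Rmult_assoc, Rinv_l in Hx1; lra. }
  assert (B * x <= Rabs B * x)%R. { apply Rmult_le_compat_r; [lra|apply Rle_abs]. }
  nra.
Qed.

Lemma Ord_const_zero n a B : Ord (S n) (fun z => a + z * B z) (fun _ => 0) -> Bnd B -> a = 0.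
Proof.
  intros [K [d [HK [Hd H]]]] [KB [e [He HB]]].
  apply Cmod_eq_0. apply (small_zero _ (K + KB) (Rmin (Rmin d e) 1)). apply Cmod_ge_0.
  repeat apply Rmin_pos; lra.
  intros x Hx.
  pose proof (Rmin_l (Rmin d e) 1). pose proof (Rmin_r (Rmin d e) 1).
  pose proof (Rmin_l d e). pose proof (Rmin_r d e).
  assert (Hz : RtoC x <> 0). { intro E. apply RtoC_inj in E. lra. }
  assert (Hm : Cmod (RtoC x) = x). { rewrite Cmod_R, Rabs_pos_eq; lra. }
  specialize (H x Hz ltac:(lra)). specialize (HB x Hz ltac:(lra)).
  rewrite Hm in H. replace (a + x * B x - 0) with (a + x * B x) in H by ring.
  pose proof (Cmod_le_sub a (- (x * B x))) as Hs.
  replace (a - - (x * B x)) with (a + x * B x) in Hs by ring.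
  rewrite Cmod_opp, Cmod_mult, Hm in Hs.
  assert (x ^ n <= 1)%R by (apply pow_le1; lra).
  assert (x ^ S n <= x)%R. { change (x ^ S n)%R with (x * x ^ n)%R. nra. }
  nra.
Qed.

Lemma Ord_div_z n F G : Ord (S n) (fun z => z * F z) (fun z => z * G z) -> Ord n F G.
Proof.
  intros [K [d [HK [Hd H]]]]. exists K, d. repeat split; auto.
  intros z Hz Hzd. specialize (H z Hz Hzd).
  replace (z * F z - z * G z) with (z * (F z - G z)) in H by ring.
  rewrite Cmod_mult in H. simpl in H.
  assert (0 < Cmod z)%R by (apply Cmod_gt_0; auto). nra.
Qed.

Open Scope C_scope.

Lemma Csub0 (x y : C) : x - y = 0 -> x = y.
Proof. intros H. replace x with ((x - y) + y) by ring. rewrite H. ring. Qed.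

Lemma Ord_ext1 n F F' G G' : (forall z, F z = F' z) -> (forall z, G z = G' z) -> Ord n F G -> Ord n F' G'.
Proof. intros H1 H2. apply (Ord_ext n F F' G G' 1%R); [lra|]. intros; auto. Qed.

Lemma poly2_zero r0 r1 r2 : Ord 3 (fun z => r0 + r1 * z + r2 * z * z) (fun _ => 0) -> r0 = 0 /\ r1 = 0 /\ r2 = 0.
Proof.
  intros H.
  assert (E0 : r0 = 0).
  { eapply (Ord_const_zero 2 r0 (fun z => r1 + r2 * z)); [|apply Bnd_add; [apply Bnd_const| apply Bnd_mul; [apply Bnd_const|apply Bnd_id]]].
    eapply Ord_ext1; [|reflexivity|apply H]. intros; simpl; ring. }
  subst r0.
  assert (H1 : Ord 2 (fun z => r1 + z * r2) (fun _ => 0)).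
  { apply Ord_div_z. eapply Ord_ext1; [| |apply H]; intros; simpl; ring. }
  assert (E1 : r1 = 0).
  { eapply (Ord_const_zero 1 r1 (fun _ => r2)); [apply H1|apply Bnd_const]. }
  subst r1.
  assert (H2 : Ord 1 (fun z => r2) (fun _ => 0)).
  { apply Ord_div_z. eapply Ord_ext1; [| |apply H1]; intros; simpl; ring. }
  assert (E2 : r2 = 0).
  { eapply (Ord_const_zero 0 r2 (fun _ => 0)); [|apply Bnd_const].
    eapply Ord_ext1; [| |apply H2]; intros; simpl; ring. }
  auto.
Qed.

Lemma poly3_zero r0 r1 r2 r3 : Ord 4 (fun z => r0 + r1 * z + r2 * z * z + r3 * z * z * z) (fun _ => 0) ->
  r0 = 0 /\ r1 = 0 /\ r2 = 0 /\ r3 = 0.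
Proof.
  intros H.
  assert (E0 : r0 = 0).
  { eapply (Ord_const_zero 3 r0 (fun z => r1 + r2 * z + r3 * z * z)).
    eapply Ord_ext1; [|reflexivity|apply H]. intros; simpl; ring.
    repeat apply Bnd_add; repeat apply Bnd_mul; try apply Bnd_const; apply Bnd_id. }
  subst r0.
  assert (H1 : Ord 3 (fun z => r1 + r2 * z + r3 * z * z) (fun _ => 0)).
  { apply Ord_div_z. eapply Ord_ext1; [| |apply H]; intros; simpl; ring. }
  destruct (poly2_zero _ _ _ H1) as [? [? ?]]. auto.
Qed.

Definition P2f p0 p1 p2 : C -> C := fun z => p0 + p1 * z + p2 * z * z.
Definition P3f p0 p1 p2 p3 : C -> C := fun z => p0 + p1 * z + p2 * z * z + p3 * z * z * z.
Definition Q2 F p0 p1 p2 := Ord 3 F (P2f p0 p1 p2).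
Definition Q3 F p0 p1 p2 p3 := Ord 4 F (P3f p0 p1 p2 p3).

Lemma Bnd_P2 p0 p1 p2 : Bnd (P2f p0 p1 p2).
Proof. unfold P2f. repeat apply Bnd_add; repeat apply Bnd_mul; try apply Bnd_const; apply Bnd_id. Qed.
Lemma Bnd_P3 p0 p1 p2 p3 : Bnd (P3f p0 p1 p2 p3).
Proof. unfold P3f. repeat apply Bnd_add; repeat apply Bnd_mul; try apply Bnd_const; apply Bnd_id. Qed.

Lemma Q2_Bnd F p0 p1 p2 : Q2 F p0 p1 p2 -> Bnd F.
Proof. intros H. eapply Bnd_Ord; [apply H|apply Bnd_P2]. Qed.
Lemma Q3_Bnd F p0 p1 p2 p3 : Q3 F p0 p1 p2 p3 -> Bnd F.
Proof. intros H. eapply Bnd_Ord; [apply H|apply Bnd_P3]. Qed.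

Lemma Q2_unique F p0 p1 p2 q0 q1 q2 : Q2 F p0 p1 p2 -> Q2 F q0 q1 q2 -> p0 = q0 /\ p1 = q1 /\ p2 = q2.
Proof.
  intros H1 H2. pose proof (Ord_trans _ _ _ _ (Ord_sym _ _ _ H1) H2) as H.
  assert (H' : Ord 3 (fun z => (p0 - q0) + (p1 - q1) * z + (p2 - q2) * z * z) (fun _ => 0)).
  { apply (Ord_trans _ _ (fun z => P2f p0 p1 p2 z - P2f q0 q1 q2 z)).
    apply Ord_exact with (Q := fun _ => 0); [intros; unfold P2f; ring|apply Bnd_const].
    eapply Ord_ext1; [| |apply (Ord_add _ _ _ _ _ H (Ord_refl 3 (fun z => - P2f q0 q1 q2 z)))]; intros; simpl; ring. }
  destruct (poly2_zero _ _ _ H') as [A [B C']].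
  repeat split; apply Csub0; auto.
Qed.

Lemma Q3_unique F p0 p1 p2 p3 q0 q1 q2 q3 : Q3 F p0 p1 p2 p3 -> Q3 F q0 q1 q2 q3 ->
  p0 = q0 /\ p1 = q1 /\ p2 = q2 /\ p3 = q3.
Proof.
  intros H1 H2. pose proof (Ord_trans _ _ _ _ (Ord_sym _ _ _ H1) H2) as H.
  assert (H' : Ord 4 (fun z => (p0 - q0) + (p1 - q1) * z + (p2 - q2) * z * z + (p3 - q3) * z * z * z) (fun _ => 0)).
  { apply (Ord_trans _ _ (fun z => P3f p0 p1 p2 p3 z - P3f q0 q1 q2 q3 z)).
    apply Ord_exact with (Q := fun _ => 0); [intros; unfold P3f; ring|apply Bnd_const].
    eapply Ord_ext1; [| |apply (Ord_add _ _ _ _ _ H (Ord_refl 4 (fun z => - P3f q0 q1 q2 q3 z)))]; intros; simpl; ring. }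
  destruct (poly3_zero _ _ _ _ H') as [A [B [C' D]]].
  repeat split; apply Csub0; auto.
Qed.

Lemma Q2_add F G p0 p1 p2 q0 q1 q2 : Q2 F p0 p1 p2 -> Q2 G q0 q1 q2 ->
  Q2 (fun z => F z + G z) (p0 + q0) (p1 + q1) (p2 + q2).
Proof.
  intros H1 H2. eapply Ord_ext1; [reflexivity| |apply (Ord_add _ _ _ _ _ H1 H2)].
  intros; unfold P2f; ring.
Qed.

Lemma Q3_add F G p0 p1 p2 p3 q0 q1 q2 q3 : Q3 F p0 p1 p2 p3 -> Q3 G q0 q1 q2 q3 ->
  Q3 (fun z => F z + G z) (p0 + q0) (p1 + q1) (p2 + q2) (p3 + q3).
Proof.
  intros H1 H2. eapply Ord_ext1; [reflexivity| |apply (Ord_add _ _ _ _ _ H1 H2)].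
  intros; unfold P3f; ring.
Qed.

Lemma Q2_mul F G p0 p1 p2 q0 q1 q2 : Q2 F p0 p1 p2 -> Q2 G q0 q1 q2 ->
  Q2 (fun z => F z * G z) (p0 * q0) (p0 * q1 + p1 * q0) (p0 * q2 + p1 * q1 + p2 * q0).
Proof.
  intros H1 H2. eapply Ord_trans; [apply (Ord_mul _ _ _ _ _ H1 H2 (Q2_Bnd _ _ _ _ H1) (Bnd_P2 _ _ _))|].
  apply Ord_exact with (Q := fun z => p1 * q2 + p2 * q1 + p2 * q2 * z).
  intros; unfold P2f; simpl; ring.
  repeat apply Bnd_add; repeat apply Bnd_mul; try apply Bnd_const; apply Bnd_id.
Qed.

Lemma Q3_mul F G p0 p1 p2 p3 q0 q1 q2 q3 : Q3 F p0 p1 p2 p3 -> Q3 G q0 q1 q2 q3 ->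
  Q3 (fun z => F z * G z) (p0 * q0) (p0 * q1 + p1 * q0) (p0 * q2 + p1 * q1 + p2 * q0)
     (p0 * q3 + p1 * q2 + p2 * q1 + p3 * q0).
Proof.
  intros H1 H2. eapply Ord_trans; [apply (Ord_mul _ _ _ _ _ H1 H2 (Q3_Bnd _ _ _ _ _ H1) (Bnd_P3 _ _ _ _))|].
  apply Ord_exact with (Q := fun z => p1 * q3 + p2 * q2 + p3 * q1 + (p2 * q3 + p3 * q2) * z + p3 * q3 * z * z).
  intros; unfold P3f; simpl; ring.
  repeat apply Bnd_add; repeat apply Bnd_mul; try apply Bnd_const; apply Bnd_id.
Qed.

Lemma Q2_const c : Q2 (fun _ => c) c 0 0.
Proof. apply Ord_exact with (Q := fun _ => 0). intros; unfold P2f; ring. apply Bnd_const. Qed.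
Lemma Q3_const c : Q3 (fun _ => c) c 0 0 0.
Proof. apply Ord_exact with (Q := fun _ => 0). intros; unfold P3f; ring. apply Bnd_const. Qed.
Lemma Q2_id : Q2 (fun z => z) 0 1 0.
Proof. apply Ord_exact with (Q := fun _ => 0). intros; unfold P2f; ring. apply Bnd_const. Qed.

Lemma Q2_scal c F p0 p1 p2 : Q2 F p0 p1 p2 -> Q2 (fun z => c * F z) (c * p0) (c * p1) (c * p2).
Proof.
  intros H. eapply Ord_ext1; [reflexivity| |apply (Q2_mul _ _ _ _ _ _ _ _ (Q2_const c) H)].
  intros; unfold P2f; ring.
Qed.
Lemma Q3_scal c F p0 p1 p2 p3 : Q3 F p0 p1 p2 p3 -> Q3 (fun z => c * F z) (c * p0) (c * p1) (c * p2) (c * p3).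
Proof.
  intros H. eapply Ord_ext1; [reflexivity| |apply (Q3_mul _ _ _ _ _ _ _ _ _ _ (Q3_const c) H)].
  intros; unfold P3f; ring.
Qed.

Lemma mul_le_1 (a m : R) : (0 <= a)%R -> (0 <= m <= 1)%R -> (a * m <= a)%R.
Proof. intros. rewrite <- (Rmult_1_r a) at 2. apply Rmult_le_compat_l; lra. Qed.

Lemma Q2_Lin u u1 u2 : Q2 u 0 u1 u2 -> Lin u.
Proof.
  intros [K [d [HK [Hd H]]]]. exists (K + Cmod u1 + Cmod u2)%R, (Rmin d 1).
  pose proof (Cmod_ge_0 u1). pose proof (Cmod_ge_0 u2).
  split; [lra|split; [apply Rmin_pos; lra|]].
  intros z Hz Hzd. pose proof (Rmin_l d 1). pose proof (Rmin_r d 1).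
  specialize (H z Hz ltac:(lra)). unfold P2f in H.
  pose proof (Cmod_le_sub (u z) (0 + u1 * z + u2 * z * z)) as Hs.
  assert (Cmod (0 + u1 * z + u2 * z * z) <= (Cmod u1 + Cmod u2) * Cmod z)%R.
  { replace (0 + u1 * z + u2 * z * z) with (u1 * z + u2 * z * z) by ring.
    eapply Rle_trans; [apply Cmod_triangle|]. rewrite !Cmod_mult.
    pose proof (Cmod_ge_0 z).
    pose proof (mul_le_1 (Cmod u2 * Cmod z) (Cmod z) ltac:(nra) ltac:(lra)). nra. }
  assert (Cmod z ^ 3 <= Cmod z)%R.
  { pose proof (Cmod_ge_0 z). assert (Cmod z ^ 2 <= 1)%R by (apply pow_le1; lra).
    change (Cmod z ^ 3)%R with (Cmod z * Cmod z ^ 2)%R. nra. }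
  nra.
Qed.

Lemma Q3_Lin u u1 u2 u3 : Q3 u 0 u1 u2 u3 -> Lin u.
Proof.
  intros [K [d [HK [Hd H]]]]. exists (K + Cmod u1 + Cmod u2 + Cmod u3)%R, (Rmin d 1).
  pose proof (Cmod_ge_0 u1). pose proof (Cmod_ge_0 u2). pose proof (Cmod_ge_0 u3).
  split; [lra|split; [apply Rmin_pos; lra|]].
  intros z Hz Hzd. pose proof (Rmin_l d 1). pose proof (Rmin_r d 1).
  specialize (H z Hz ltac:(lra)). unfold P3f in H.
  pose proof (Cmod_le_sub (u z) (0 + u1 * z + u2 * z * z + u3 * z * z * z)) as Hs.
  pose proof (Cmod_ge_0 z).
  assert (Cmod (0 + u1 * z + u2 * z * z + u3 * z * z * z) <= (Cmod u1 + Cmod u2 + Cmod u3) * Cmod z)%R.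
  { replace (0 + u1 * z + u2 * z * z + u3 * z * z * z) with (u1 * z + u2 * z * z + u3 * z * z * z) by ring.
    eapply Rle_trans; [apply Cmod_triangle|]. eapply Rle_trans; [apply Rplus_le_compat_r, Cmod_triangle|].
    rewrite !Cmod_mult.
    pose proof (mul_le_1 (Cmod u2 * Cmod z) (Cmod z) ltac:(nra) ltac:(lra)).
    assert (0 <= Cmod u3 * Cmod z)%R by (apply Rmult_le_pos; lra).
    assert (0 <= Cmod u3 * Cmod z * Cmod z)%R by (apply Rmult_le_pos; lra).
    pose proof (mul_le_1 (Cmod u3 * Cmod z) (Cmod z) ltac:(lra) ltac:(lra)).
    pose proof (mul_le_1 (Cmod u3 * Cmod z * Cmod z) (Cmod z) ltac:(lra) ltac:(lra)). nra. }
  assert (Cmod z ^ 4 <= Cmod z)%R.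
  { assert (Cmod z ^ 3 <= 1)%R by (apply pow_le1; lra).
    change (Cmod z ^ 4)%R with (Cmod z * Cmod z ^ 3)%R. nra. }
  nra.
Qed.

Lemma Q2_comp Phi u p0 p1 p2 u1 u2 : Q2 Phi p0 p1 p2 -> Phi 0 = p0 -> Q2 u 0 u1 u2 ->
  Q2 (fun z => Phi (u z)) p0 (p1 * u1) (p1 * u2 + p2 * u1 * u1).
Proof.
  intros H H0 Hu.
  eapply Ord_trans; [apply (Ord_comp _ _ _ _ H); [unfold P2f; rewrite H0; ring|eapply Q2_Lin; eauto]|].
  unfold P2f at 1.
  pose proof (Q2_add _ _ _ _ _ _ _ _ (Q2_add _ _ _ _ _ _ _ _ (Q2_const p0) (Q2_scal p1 _ _ _ _ Hu))
     (Q2_scal p2 _ _ _ _ (Q2_mul _ _ _ _ _ _ _ _ Hu Hu))) as HH.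
  eapply Ord_ext1; [| |apply HH]; intros; unfold P2f; simpl; ring.
Qed.

Lemma Q3_comp Phi u p0 p1 p2 p3 u1 u2 u3 : Q3 Phi p0 p1 p2 p3 -> Phi 0 = p0 -> Q3 u 0 u1 u2 u3 ->
  Q3 (fun z => Phi (u z)) p0 (p1 * u1) (p1 * u2 + p2 * u1 * u1)
     (p1 * u3 + 2 * p2 * u1 * u2 + p3 * u1 * u1 * u1).
Proof.
  intros H H0 Hu.
  eapply Ord_trans; [apply (Ord_comp _ _ _ _ H); [unfold P3f; rewrite H0; ring|eapply Q3_Lin; eauto]|].
  unfold P3f at 1.
  pose proof (Q3_mul _ _ _ _ _ _ _ _ _ _ Hu Hu) as Hu2.
  pose proof (Q3_mul _ _ _ _ _ _ _ _ _ _ Hu2 Hu) as Hu3.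
  pose proof (Q3_add _ _ _ _ _ _ _ _ _ _ (Q3_add _ _ _ _ _ _ _ _ _ _ (Q3_add _ _ _ _ _ _ _ _ _ _ (Q3_const p0) (Q3_scal p1 _ _ _ _ _ Hu))
     (Q3_scal p2 _ _ _ _ _ Hu2)) (Q3_scal p3 _ _ _ _ _ Hu3)) as HH.
  eapply Ord_ext1; [| |apply HH]; intros; unfold P3f; simpl; ring.
Qed.

Open Scope C_scope.

Lemma Cnorm_eq (x : C) : norm x = Cmod x.
Proof. reflexivity. Qed.

Lemma geom_scaled (A q : R) : (0 <= q < 1)%R -> is_series (fun k => A * q ^ k)%R (A / (1 - q))%R.
Proof.
  intros Hq. pose proof (is_series_geom q ltac:(rewrite Rabs_pos_eq; lra)) as G.
  apply (is_series_scal_l A) in G. exact G.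
Qed.

Lemma coef_bound h c (rho : R) : taylor_on_U h c -> (0 < rho < 1)%R ->
  exists M, (0 <= M)%R /\ forall n, (Cmod (c n) * rho ^ n <= M)%R.
Proof.
  intros Ht Hr.
  assert (Hin : inU (RtoC rho)). { unfold inU. rewrite Cmod_R, Rabs_pos_eq; lra. }
  destruct (series_terms_bounded _ _ (Ht _ Hin)) as [M HM].
  exists (Rmax M 0). split; [apply Rmax_r|]. intros n. specialize (HM n).
  rewrite Cnorm_eq, Cmod_mult, Cmod_pow, Cmod_R, Rabs_pos_eq in HM by lra.
  eapply Rle_trans; [apply HM|apply Rmax_l].
Qed.

Lemma coef_bound2 h c : taylor_on_U h c -> exists M, (0 <= M)%R /\ forall n, (Cmod (c n) <= M * 2 ^ n)%R.
Proof.
  intros Ht. destruct (coef_bound h c (1/2) Ht ltac:(lra)) as [M [HM H]].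
  exists M. split; auto. intros n. specialize (H n).
  assert (E : ((1/2) ^ n * 2 ^ n = 1)%R). { rewrite <- Rpow_mult_distr. replace (1/2*2)%R with 1%R by field. apply pow1. }
  assert (0 < 2 ^ n)%R by (apply pow_lt; lra).
  apply (Rmult_le_compat_r (2 ^ n)) in H; [|lra]. rewrite Rmult_assoc, E, Rmult_1_r in H. exact H.
Qed.

Definition CoefB (c : nat -> C) (M Rb : R) := (0 <= M)%R /\ (1 <= Rb)%R /\ forall n, (Cmod (c n) <= M * Rb ^ n)%R.

Definition SerOn (h : C -> C) (c : nat -> C) (r : R) :=
  forall z : C, (Cmod z < r)%R -> is_series (fun n => c n * z ^ n) (h z).

Lemma tail_bound h c M Rb r : CoefB c M Rb -> (0 < r)%R -> (r <= / (8 * Rb))%R -> SerOn h c r ->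
  forall K z, (Cmod z < r)%R -> (Cmod ((h z - sum_n (fun n => c n * z ^ n) K)%C) <= 2 * M * (Rb * Cmod z) ^ (S K))%R.
Proof.
  intros [HM [HR Hc]] Hr HrR Hs K z Hz.
  set (a := fun n => c n * z ^ n).
  set (l := h z - sum_n a K).
  assert (H1 : is_series a (plus l (sum_n a K))).
  { replace (plus l (sum_n a K)) with (h z). apply Hs; auto. change (h z = l + sum_n a K). unfold l. ring. }
  apply (is_series_incr_n a (S K) l ltac:(lia)) in H1.
  set (q := (Rb * Cmod z)%R).
  assert (Hq0 : (0 <= q)%R). { unfold q. pose proof (Cmod_ge_0 z). nra. }
  assert (Hq1 : (q <= /8)%R).
  { unfold q. assert (Rb * r <= /8)%R.
    { apply (Rmult_le_compat_l Rb) in HrR; [|lra]. rewrite Rinv_mult, <- Rmult_assoc, (Rmult_comm Rb (/8)), Rmult_assoc, Rinv_r, Rmult_1_r in HrR; lra. }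
    pose proof (Cmod_ge_0 z). nra. }
  assert (H2 := geom_scaled (M * q ^ S K) (/8) ltac:(lra)).
  pose proof (series_norm_le _ _ _ _ H1 H2) as HH.
  assert (HB : forall k, (norm (a (S K + k)%nat) <= M * q ^ S K * (/8) ^ k)%R).
  { intros k. rewrite Cnorm_eq. unfold a. rewrite Cmod_mult, Cmod_pow.
    eapply Rle_trans. { apply Rmult_le_compat_r; [apply pow_le, Cmod_ge_0|apply Hc]. }
    rewrite Rmult_assoc, <- Rpow_mult_distr. fold q. rewrite pow_add, Rmult_assoc.
    apply Rmult_le_compat_l; auto. apply Rmult_le_compat_l; [apply pow_le; auto|]. apply pow_incr; lra. }
  specialize (HH HB). rewrite Cnorm_eq in HH. fold a. fold l.
  eapply Rle_trans; [apply HH|].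
  assert (0 <= M * q ^ S K)%R by (apply Rmult_le_pos; [auto|apply pow_le; auto]).
  unfold Rdiv. replace (/ (1 - /8))%R with (8/7)%R by field. fold q. nra.
Qed.

Lemma ser_at0 h c M Rb r : CoefB c M Rb -> (0 < r)%R -> (r <= / (8 * Rb))%R -> SerOn h c r -> h 0 = c 0%nat.
Proof.
  intros Hc Hr HrR Hs. pose proof (tail_bound h c M Rb r Hc Hr HrR Hs 0 0 ltac:(rewrite Cmod_0; lra)) as H.
  rewrite sum_O, Cmod_0 in H. simpl in H. rewrite Rmult_0_r, Rmult_0_l, Rmult_0_r in H.
  apply Csub0, Cmod_eq_0. pose proof (Cmod_ge_0 (h 0 - c 0%nat * 1)). replace (c 0%nat) with (c 0%nat * 1) by ring. lra.
Qed.

Lemma ser_Q2 h c M Rb r : CoefB c M Rb -> (0 < r)%R -> (r <= / (8 * Rb))%R -> SerOn h c r ->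
  Q2 h (c 0%nat) (c 1%nat) (c 2%nat).
Proof.
  intros Hc Hr HrR Hs. exists (2 * M * Rb ^ 3)%R, r. pose proof Hc as [HM [HR _]].
  split. apply Rmult_le_pos; [lra|apply pow_le; lra]. split; auto.
  intros z _ Hz. pose proof (tail_bound h c M Rb r Hc Hr HrR Hs 2 z Hz) as H.
  rewrite !sum_Sn, sum_O in H. unfold P2f.
  replace (h z - (c 0%nat + c 1%nat * z + c 2%nat * z * z)) with
    (h z - plus (plus (c 0%nat * z ^ 0) (c 1%nat * z ^ 1)) (c 2%nat * z ^ 2)) by (simpl; change plus with Cplus; simpl; ring).
  eapply Rle_trans; [apply H|]. rewrite Rpow_mult_distr. right; ring.
Qed.

Lemma ser_Q3 h c M Rb r : CoefB c M Rb -> (0 < r)%R -> (r <= / (8 * Rb))%R -> SerOn h c r ->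
  Q3 h (c 0%nat) (c 1%nat) (c 2%nat) (c 3%nat).
Proof.
  intros Hc Hr HrR Hs. exists (2 * M * Rb ^ 4)%R, r. pose proof Hc as [HM [HR _]].
  split. apply Rmult_le_pos; [lra|apply pow_le; lra]. split; auto.
  intros z _ Hz. pose proof (tail_bound h c M Rb r Hc Hr HrR Hs 3 z Hz) as H.
  rewrite !sum_Sn, sum_O in H. unfold P3f.
  replace (h z - (c 0%nat + c 1%nat * z + c 2%nat * z * z + c 3%nat * z * z * z)) with
    (h z - plus (plus (plus (c 0%nat * z ^ 0) (c 1%nat * z ^ 1)) (c 2%nat * z ^ 2)) (c 3%nat * z ^ 3)) by (simpl; change plus with Cplus; simpl; ring).
  eapply Rle_trans; [apply H|]. rewrite Rpow_mult_distr. right; ring.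
Qed.

Open Scope C_scope.

Definition En (w z : C) (n : nat) : C := w ^ n - z ^ n - RtoC (INR n) * z ^ (pred n) * (w - z).

Lemma En_01 w z : En w z 0 = 0 /\ En w z 1 = 0.
Proof. unfold En; simpl; split; ring. Qed.

Lemma En_rec w z n : En w z (S (S (S n))) = w * En w z (S (S n)) + RtoC (INR (S (S n))) * z ^ (S n) * (w - z) * (w - z).
Proof.
  unfold En. simpl pred. rewrite !S_INR, !RtoC_plus. simpl. ring.
Qed.

Lemma En_bound w z (rho : R) n : (Cmod w <= rho)%R -> (Cmod z <= rho)%R ->
  (Cmod (En w z (S (S n))) <= (INR (S (S n))) ^ 2 * rho ^ n * Cmod (w - z) ^ 2)%R.
Proof.
  intros Hw Hz. pose proof (Cmod_ge_0 z). pose proof (Cmod_ge_0 (w - z)).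
  induction n.
  - replace (En w z 2) with ((w - z) * (w - z)).
    2:{ unfold En. simpl. rewrite RtoC_plus. ring. }
    rewrite Cmod_mult. simpl. nra.
  - rewrite En_rec. eapply Rle_trans; [apply Cmod_triangle|]. rewrite !Cmod_mult, Cmod_pow, Cmod_R.
    rewrite Rabs_pos_eq by (apply pos_INR).
    rewrite (S_INR (S (S n))).
    set (I := INR (S (S n))). assert (HI : (0 <= I)%R) by apply pos_INR.
    set (P := (rho ^ n)%R). assert (Hp : (0 <= P)%R) by (apply pow_le; lra).
    set (d := Cmod (w - z)).
    assert (Hzp : (Cmod z ^ S n <= rho * P)%R) by (change (rho * P)%R with (rho ^ S n)%R; apply pow_incr; lra).
    assert (Hw0 : (0 <= Cmod w)%R) by apply Cmod_ge_0.
    assert (T1 : (Cmod w * Cmod (En w z (S (S n))) <= rho * (I ^ 2 * P * d ^ 2))%R).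
    { apply Rmult_le_compat; auto. apply Cmod_ge_0. }
    assert (T2 : (I * Cmod z ^ S n * d * d <= I * (rho * P) * d ^ 2)%R).
    { replace (I * Cmod z ^ S n * d * d)%R with (I * (Cmod z ^ S n) * (d * d))%R by ring.
      replace (d ^ 2)%R with (d * d)%R by ring.
      apply Rmult_le_compat_r; [apply Rmult_le_pos; unfold d; apply Cmod_ge_0|].
      apply Rmult_le_compat_l; auto. }
    change (rho ^ S n)%R with (rho * P)%R.
    assert (0 <= rho * P * d ^ 2)%R. { apply Rmult_le_pos; [apply Rmult_le_pos|apply pow2_ge_0]; lra. }
    nra.
Qed.

Lemma sq_le_4pow n : ((INR (S (S n))) ^ 2 <= 4 * 4 ^ n)%R.
Proof.
  induction n.
  - simpl. lra.
  - rewrite (S_INR (S (S n))). assert (1 <= INR (S (S n)))%R by (rewrite S_INR; pose proof (pos_INR (S n)); lra). set (I := INR (S (S n))) in *. change (4 ^ S n)%R with (4 * 4 ^ n)%R. nra.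
Qed.

Lemma Sn_le_2pow n : (INR (S n) <= 2 ^ n)%R.
Proof.
  induction n.
  - simpl; lra.
  - rewrite S_INR. simpl pow. pose proof (pos_INR (S n)). assert (1 <= 2 ^ n)%R.
    { clear. induction n; simpl; lra. } lra.
Qed.

Lemma deriv_of_bound (h : C -> C) z D K r : (0 < r)%R -> (Cmod z < r)%R -> (0 <= K)%R ->
  (forall w : C, (Cmod w < r)%R -> (Cmod (h w - h z - (w - z) * D) <= K * Cmod (w - z) ^ 2)%R) ->
  is_derive h z D.
Proof.
  intros Hr Hz HK H. split; [apply is_linear_scal_l|].
  intros x Hx. assert (Hzx : z = x) by (apply (@is_filter_lim_locally_unique C_AbsRing (AbsRing_NormedModule C_AbsRing)); exact Hx). subst x.
  intros eps.
  assert (Hd : (0 < Rmin (r - Cmod z) (eps / (K + 1)))%R).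
  { apply Rmin_pos; [lra|]. apply Rdiv_lt_0_compat; [apply cond_pos|lra]. }
  exists (mkposreal _ Hd). intros y Hy. change (Cmod (y - z) < Rmin (r - Cmod z) (eps / (K + 1)))%R in Hy.
  change (Cmod (h y - h z - (y - z) * D) <= eps * Cmod (y - z))%R.
  pose proof (Rmin_l (r - Cmod z) (eps / (K + 1))). pose proof (Rmin_r (r - Cmod z) (eps / (K + 1))).
  assert (Cmod y < r)%R. { pose proof (Cmod_le_sub y z). lra. }
  eapply Rle_trans; [apply H; auto|].
  assert (K * Cmod (y - z) <= eps)%R.
  { assert (Cmod (y - z) <= eps / (K + 1))%R by lra.
    apply (Rmult_le_compat_l K) in H3; auto. pose proof (cond_pos eps).
    assert (K * (eps / (K + 1)) <= eps)%R.
    { unfold Rdiv. rewrite <- Rmult_assoc. apply (Rmult_le_reg_r (K + 1)); [lra|].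
      rewrite Rmult_assoc, Rinv_l by lra. nra. }
    lra. }
  pose proof (Cmod_ge_0 (y - z)). simpl. nra.
Qed.

Lemma is_series_Cminus (a b : nat -> C) la lb : is_series a la -> is_series b lb ->
  is_series (fun n => a n - b n) (la - lb).
Proof. intros Ha Hb. exact (is_series_minus a b la lb Ha Hb). Qed.

Lemma is_series_Cscal (c : C) (a : nat -> C) la : is_series a la -> is_series (fun n => c * a n) (c * la).
Proof. intros Ha. exact (@is_series_scal C_AbsRing C_NormedModule c a la Ha). Qed.

Lemma Rbr_le (Rb r : R) : (1 <= Rb)%R -> (0 < r)%R -> (r <= / (8 * Rb))%R -> (Rb * r <= /8)%R.
Proof.
  intros HR Hr H. apply (Rmult_le_compat_l Rb) in H; [|lra].
  rewrite Rinv_mult, <- Rmult_assoc, (Rmult_comm Rb (/8)), Rmult_assoc, Rinv_r, Rmult_1_r in H; lra.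
Qed.

Lemma deriv_ser h c M Rb r : CoefB c M Rb -> (0 < r)%R -> (r <= / (8 * Rb))%R -> SerOn h c r ->
  forall z, (Cmod z < r)%R -> exists D, is_series (fun n => (RtoC (INR (S n)) * c (S n)) * z ^ n) D /\ is_derive h z D.
Proof.
  intros Hc Hr HrR Hs z Hz. pose proof Hc as [HM [HR Hcb]].
  pose proof (Rbr_le Rb r HR Hr HrR) as Hbr.
  pose proof (Cmod_ge_0 z) as Hz0.
  assert (Hex : ex_series (fun n => (RtoC (INR (S n)) * c (S n)) * z ^ n)).
  { apply (@ex_series_le C_AbsRing C_CompleteNormedModule _ (fun n => M * Rb * (/4) ^ n)%R).
    - intros n. change (norm ?x) with (Cmod x). rewrite !Cmod_mult, Cmod_R, Cmod_pow, Rabs_pos_eq by apply pos_INR.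
      pose proof (Sn_le_2pow n). pose proof (Hcb (S n)).
      assert (Hq : (Rb * Cmod z <= /8)%R) by nra.
      assert (Hp : (Cmod z ^ n * Rb ^ n <= (/8) ^ n)%R). { rewrite <- Rpow_mult_distr. apply pow_incr. nra. }
      assert (E : ((/4) ^ n = 2 ^ n * (/8) ^ n)%R). { rewrite <- Rpow_mult_distr. f_equal. lra. }
      rewrite E. simpl pow in H0.
      assert (0 <= Cmod z ^ n)%R by (apply pow_le; lra).
      assert (0 <= Rb ^ n)%R by (apply pow_le; lra).
      assert (0 <= Cmod (c (S n)))%R by apply Cmod_ge_0.
      assert (0 <= (/8) ^ n)%R by (apply pow_le; lra).
      assert (INR (S n) * Cmod (c (S n)) <= 2 ^ n * (M * (Rb * Rb ^ n)))%R.
      { apply Rmult_le_compat; auto. apply pos_INR. }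
      assert (A1 : (INR (S n) * Cmod (c (S n)) * Cmod z ^ n <= 2 ^ n * (M * (Rb * Rb ^ n)) * Cmod z ^ n)%R).
      { apply Rmult_le_compat_r; auto. }
      eapply Rle_trans; [apply A1|].
      replace (2 ^ n * (M * (Rb * Rb ^ n)) * Cmod z ^ n)%R with (M * Rb * 2 ^ n * (Cmod z ^ n * Rb ^ n))%R by ring.
      replace (M * Rb * (2 ^ n * (/ 8) ^ n))%R with (M * Rb * 2 ^ n * (/ 8) ^ n)%R by ring.
      apply Rmult_le_compat_l; auto. apply Rmult_le_pos; [nra|apply pow_le; lra].
    - eexists. apply geom_scaled. lra. }
  destruct Hex as [D HD]. exists D. split; auto.
  set (d := fun n => c n * (RtoC (INR n) * z ^ (pred n))).
  assert (Hd : is_series d D).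
  { assert (H : d 0%nat = 0) by (unfold d; simpl; ring).
    assert (H2 : is_series (fun k => d (S k)) D). { eapply is_series_ext; [|apply HD]. intros n. unfold d. simpl pred. match goal with |- ?a = ?b => change (a = b :> C) end. ring. }
    apply is_series_decr_1.
    assert (E : forall x, x = D -> is_series (fun k => d (S k)) x) by (intros; subst; auto).
    apply E. change (D + - d 0%nat = D). rewrite H. ring. }
  apply (deriv_of_bound h z D (32 * M * Rb ^ 2) r Hr Hz ltac:(apply Rmult_le_pos; [lra|apply pow2_ge_0])).
  intros w Hw.
  assert (HT : is_series (fun n => c n * En w z n) (h w - h z - (w - z) * D)).
  { eapply is_series_ext; [|apply is_series_Cminus; [apply is_series_Cminus; [apply (Hs w Hw)|apply (Hs z Hz)]|apply is_series_Cscal; apply Hd]].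
    intros n. unfold d, En. simpl. ring. }
  set (dd := Cmod (w - z)).
  assert (Hdd : (0 <= dd ^ 2)%R) by apply pow2_ge_0.
  apply (series_norm_le _ (fun n => 16 * M * Rb ^ 2 * dd ^ 2 * (/2) ^ n)%R _ _ HT).
  - replace (32 * M * Rb ^ 2 * dd ^ 2)%R with (16 * M * Rb ^ 2 * dd ^ 2 / (1 - /2))%R by field.
    apply geom_scaled; lra.
  - intros n. change (norm ?x) with (Cmod x). rewrite Cmod_mult.
    assert (0 <= 16 * M * Rb ^ 2 * dd ^ 2 * (/2) ^ n)%R.
    { apply Rmult_le_pos; [|apply pow_le; lra]. apply Rmult_le_pos; auto. apply Rmult_le_pos; [lra|apply pow2_ge_0]. }
    destruct n as [|[|m]].
    + rewrite (proj1 (En_01 w z)), Cmod_0, Rmult_0_r. auto.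
    + rewrite (proj2 (En_01 w z)), Cmod_0, Rmult_0_r. auto.
    + pose proof (En_bound w z r m ltac:(lra) ltac:(lra)) as HE. fold dd in HE.
      pose proof (Hcb (S (S m))) as Hc2. pose proof (sq_le_4pow m) as H4.
      assert (Hrm : (Rb ^ m * r ^ m <= (/8) ^ m)%R). { rewrite <- Rpow_mult_distr. apply pow_incr. nra. }
      assert (0 <= Rb ^ m)%R by (apply pow_le; lra). assert (0 <= r ^ m)%R by (apply pow_le; lra).
      assert (0 <= (/8) ^ m)%R by (apply pow_le; lra). assert (0 <= 4 ^ m)%R by (apply pow_le; lra).
      assert (0 <= INR (S (S m)) ^ 2)%R by apply pow2_ge_0.
      eapply Rle_trans. { apply Rmult_le_compat; [apply Cmod_ge_0|apply Cmod_ge_0|apply Hc2|apply HE]. }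
      assert (E1 : ((/2) ^ S (S m) = /4 * (4 ^ m * (/8) ^ m))%R).
      { rewrite <- Rpow_mult_distr. simpl. replace (4 * /8)%R with (/2)%R by field. field. }
      rewrite E1.
      replace (M * Rb ^ S (S m) * (INR (S (S m)) ^ 2 * r ^ m * dd ^ 2))%R with
        (M * Rb ^ 2 * dd ^ 2 * (INR (S (S m)) ^ 2 * (Rb ^ m * r ^ m)))%R by (simpl; ring).
      replace (16 * M * Rb ^ 2 * dd ^ 2 * (/ 4 * (4 ^ m * (/ 8) ^ m)))%R with
        (M * Rb ^ 2 * dd ^ 2 * ((4 * 4 ^ m) * (/ 8) ^ m))%R by field.
      apply Rmult_le_compat_l. { apply Rmult_le_pos; auto. apply Rmult_le_pos; [lra|apply pow2_ge_0]. }
      apply Rmult_le_compat; auto. apply Rmult_le_pos; auto.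
Qed.

Open Scope C_scope.

Definition dcoef (c : nat -> C) : nat -> C := fun n => RtoC (INR (S n)) * c (S n).

Lemma CoefB_d c M Rb : CoefB c M Rb -> CoefB (dcoef c) (M * Rb) (2 * Rb).
Proof.
  intros [HM [HR H]]. split; [nra|split; [lra|]].
  intros n. unfold dcoef. rewrite Cmod_mult, Cmod_R, Rabs_pos_eq by apply pos_INR.
  pose proof (Sn_le_2pow n). pose proof (H (S n)).
  eapply Rle_trans. { apply Rmult_le_compat; [apply pos_INR|apply Cmod_ge_0|apply H0|apply H1]. }
  rewrite Rpow_mult_distr. simpl. assert (0 <= Rb ^ n)%R by (apply pow_le; lra).
  assert (0 <= 2 ^ n)%R by (apply pow_le; lra). right; ring.
Qed.

Lemma deriv_coef h h1 c M Rb r : CoefB c M Rb -> (0 < r)%R -> (r <= / (8 * Rb))%R -> SerOn h c r ->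
  (forall z, (Cmod z < r)%R -> is_derive h z (h1 z)) -> SerOn h1 (dcoef c) r.
Proof.
  intros Hc Hr HrR Hs Hd z Hz.
  destruct (deriv_ser h c M Rb r Hc Hr HrR Hs z Hz) as [D [HD1 HD2]].
  assert (E : D = h1 z).
  { rewrite <- (is_C_derive_unique _ _ _ HD2). apply is_C_derive_unique. apply Hd; auto. }
  rewrite <- E. exact HD1.
Qed.

Lemma half_rad (r Rb : R) : (0 < r)%R -> (1 <= Rb)%R -> (r <= / (8 * Rb))%R -> (r / 2 <= / (8 * (2 * Rb)))%R.
Proof.
  intros Hr HR H. rewrite (Rinv_mult 8 (2 * Rb)), Rinv_mult. rewrite Rinv_mult in H.
  unfold Rdiv. nra.
Qed.

Lemma SerOn_shrink h c r r' : (r' <= r)%R -> SerOn h c r -> SerOn h c r'.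
Proof. intros H Hs z Hz. apply Hs. lra. Qed.

Open Scope R_scope.

Lemma fact_ge1 n : (1 <= Factorial.fact n)%nat.
Proof. induction n; simpl; lia. Qed.

Lemma inv_fact_le1 n : Rabs (/ INR (Factorial.fact n)) <= 1.
Proof.
  pose proof (le_INR _ _ (fact_ge1 n)). simpl in H.
  rewrite Rabs_pos_eq. rewrite <- Rinv_1. apply Rinv_le_contravar; lra.
  apply Rlt_le, Rinv_0_lt_compat. lra.
Qed.

Lemma Rtail (a : nat -> R) q l K : is_series (fun i => a i * q ^ i) l -> (forall i, Rabs (a i) <= 1) ->
  Rabs q <= 1/2 -> Rabs (l - sum_n (fun i => a i * q ^ i) K) <= 2 * Rabs q ^ (S K).
Proof.
  intros Hs Ha Hq.
  set (b := fun i => a i * q ^ i).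
  set (l' := l - sum_n b K).
  assert (H1 : is_series b (plus l' (sum_n b K))).
  { replace (plus l' (sum_n b K)) with l; auto. change (l = l' + sum_n b K :> R). unfold l', Rminus. rewrite Rplus_assoc, Rplus_opp_l, Rplus_0_r. reflexivity. }
  apply (is_series_incr_n b (S K) l' ltac:(lia)) in H1.
  pose proof (Rabs_pos q).
  pose proof (geom_scaled (Rabs q ^ S K) (1/2) ltac:(lra)) as H2.
  pose proof (series_norm_le _ _ _ _ H1 H2) as HH.
  change (norm ?x) with (Rabs x) in HH. fold l'.
  assert (0 <= Rabs q ^ S K) by (apply pow_le; lra).
  replace (2 * Rabs q ^ S K) with (Rabs q ^ S K / (1 - 1/2)) by field.
  apply HH. intros k. change (norm ?x) with (Rabs x). unfold b.
  rewrite Rabs_mult, RPow_abs, pow_add.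
  assert (Rabs q ^ k <= (1/2) ^ k) by (apply pow_incr; lra).
  assert (0 <= Rabs q ^ k) by (apply pow_le; lra).
  pose proof (Ha (S K + k)%nat). pose proof (Rabs_pos (a (S K + k)%nat)).
  assert (Rabs (a (S K + k)%nat) * (Rabs q ^ S K * Rabs q ^ k) <= 1 * (Rabs q ^ S K * Rabs q ^ k)).
  { apply Rmult_le_compat_r; auto. apply Rmult_le_pos; auto. }
  assert (Rabs q ^ S K * Rabs q ^ k <= Rabs q ^ S K * (1/2) ^ k) by (apply Rmult_le_compat_l; auto).
  rewrite Rabs_mult, <- !RPow_abs. lra.
Qed.

Lemma exp_bound x : Rabs x <= 1/2 -> Rabs (exp x - (1 + x + x * x / 2)) <= 2 * Rabs x ^ 3.
Proof.
  intros Hx. unfold exp. destruct (exist_exp x) as [l Hl]. simpl.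
  apply is_series_Reals in Hl.
  pose proof (Rtail (fun i => / INR (Factorial.fact i)) x l 2 Hl inv_fact_le1 Hx) as H.
  rewrite !sum_Sn, sum_O in H. change plus with Rplus in H. simpl in H.
  replace (1 + x + x * x / 2) with (/ 1 * 1 + / 1 * (x * 1) + / (1 + 1) * (x * (x * 1))) by field.
  exact H.
Qed.

Lemma cos_bound2 y : Rabs y <= 1/2 -> Rabs (cos y - (1 - y * y / 2)) <= 2 * Rabs y ^ 4.
Proof.
  intros Hy. unfold cos. destruct (exist_cos (Rsqr y)) as [l Hl]. unfold cos_in in Hl.
  apply is_series_Reals in Hl.
  assert (Hq : Rabs (Rsqr y) <= 1/2).
  { unfold Rsqr. rewrite Rabs_mult. pose proof (Rabs_pos y). nra. }
  assert (Hc : forall i, Rabs (cos_n i) <= 1).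
  { intros i. unfold cos_n. unfold Rdiv. rewrite Rabs_mult, pow_1_abs. rewrite Rmult_1_l. apply inv_fact_le1. }
  pose proof (Rtail cos_n (Rsqr y) l 1 Hl Hc Hq) as H.
  rewrite !sum_Sn, sum_O in H. change plus with Rplus in H.
  unfold cos_n in H. simpl in H.
  replace (1 - y * y / 2) with (1 / 1 * 1 + -1 * 1 / (1 + 1) * (y² * 1)) by (unfold Rsqr; field).
  replace (Rabs y ^ 4) with (Rabs y² ^ 2). exact H.
  unfold Rsqr. rewrite Rabs_mult. ring.
Qed.

Lemma sin_bound2 y : Rabs y <= 1/2 -> Rabs (sin y - y) <= 2 * Rabs y ^ 3.
Proof.
  intros Hy. unfold sin. destruct (exist_sin (Rsqr y)) as [l Hl]. unfold sin_in in Hl.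
  apply is_series_Reals in Hl.
  assert (Hq : Rabs (Rsqr y) <= 1/2).
  { unfold Rsqr. rewrite Rabs_mult. pose proof (Rabs_pos y). nra. }
  assert (Hc : forall i, Rabs (sin_n i) <= 1).
  { intros i. unfold sin_n. unfold Rdiv. rewrite Rabs_mult, pow_1_abs. rewrite Rmult_1_l. apply inv_fact_le1. }
  pose proof (Rtail sin_n (Rsqr y) l 0 Hl Hc Hq) as H.
  rewrite sum_O in H. unfold sin_n in H. simpl in H.
  replace (1 / 1 * 1) with 1 in H by field.
  replace (y * l - y) with (y * (l - 1)) by ring. rewrite Rabs_mult.
  replace (Rabs y ^ 3) with (Rabs y * Rabs y²) by (unfold Rsqr; rewrite Rabs_mult; ring).
  replace (Rabs y² * 1) with (Rabs y²) in H by ring.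
  pose proof (Rabs_pos y). nra.
Qed.

Open Scope C_scope.

Lemma re_le (w : C) : (Rabs (Re w) <= Cmod w)%R.
Proof. apply re_le_Cmod. Qed.

Lemma im_le (w : C) : (Rabs (Im w) <= Cmod w)%R.
Proof.
  pose proof (Cmod2_alt w). pose proof (Cmod_ge_0 w).
  apply Rabs_le. split; nra.
Qed.

Lemma Cmod_pair_le (a b : R) : (Cmod (a, b) <= Rabs a + Rabs b)%R.
Proof.
  pose proof (Cmod2_alt (a, b)) as H. simpl in H. pose proof (Cmod_ge_0 (a, b)).
  pose proof (Rabs_pos a). pose proof (Rabs_pos b).
  assert (Rabs a * Rabs a = a * a)%R by (rewrite <- Rabs_mult; apply Rabs_pos_eq; nra).
  assert (Rabs b * Rabs b = b * b)%R by (rewrite <- Rabs_mult; apply Rabs_pos_eq; nra).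
  nra.
Qed.

Lemma C_decomp (w : C) : w = RtoC (Re w) + Ci * RtoC (Im w).
Proof.
  destruct w as [a b]. unfold RtoC, Ci, Cplus, Cmult, Re, Im. simpl. f_equal; ring.
Qed.

Lemma Cexp_split (w : C) : Cexp w = RtoC (exp (Re w)) * (cos (Im w), sin (Im w)).
Proof.
  unfold Cexp, RtoC, Cmult. simpl. f_equal; ring.
Qed.

Definition Xf (w : C) : C := RtoC (Re w).
Definition Yf (w : C) : C := RtoC (Im w).

Lemma Bnd_X : Bnd Xf.
Proof. exists 1%R, 1%R. split; [lra|]. intros z _ Hz. unfold Xf. rewrite Cmod_R. pose proof (re_le z). lra. Qed.
Lemma Bnd_Y : Bnd Yf.
Proof. exists 1%R, 1%R. split; [lra|]. intros z _ Hz. unfold Yf. rewrite Cmod_R. pose proof (im_le z). lra. Qed.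

Lemma Ord_exp_re : Ord 3 (fun w => RtoC (exp (Re w))) (fun w => 1 + Xf w + Xf w * Xf w / 2).
Proof.
  exists 2%R, (1/2)%R. split; [lra|split; [lra|]]. intros z _ Hz. unfold Xf.
  pose proof (re_le z).
  replace (RtoC (exp (Re z)) - (1 + RtoC (Re z) + RtoC (Re z) * RtoC (Re z) / 2)) with
    (RtoC (exp (Re z) - (1 + Re z + Re z * Re z / 2))).
  2:{ unfold RtoC, Cminus, Cplus, Cmult, Copp, Cdiv, Cinv. simpl. f_equal; field. }
  rewrite Cmod_R. eapply Rle_trans; [apply exp_bound; lra|].
  apply Rmult_le_compat_l; [lra|]. apply pow_incr. split; [apply Rabs_pos|lra].
Qed.

Lemma Ord_cis : Ord 3 (fun w => (cos (Im w), sin (Im w))) (fun w => 1 + Ci * Yf w - Yf w * Yf w / 2).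
Proof.
  exists 4%R, (1/2)%R. split; [lra|split; [lra|]]. intros z _ Hz. unfold Yf.
  pose proof (im_le z). set (y := Im z).
  replace ((cos y, sin y) - (1 + Ci * RtoC y - RtoC y * RtoC y / 2)) with
    ((cos y - (1 - y * y / 2), sin y - y)%R : C).
  2:{ unfold Ci, RtoC, Cminus, Cplus, Cmult, Copp, Cdiv, Cinv. simpl. f_equal; field. }
  eapply Rle_trans; [apply Cmod_pair_le|].
  fold y in H. pose proof (cos_bound2 y ltac:(lra)). pose proof (sin_bound2 y ltac:(lra)).
  pose proof (Rabs_pos y).
  assert (Rabs y ^ 3 <= Cmod z ^ 3)%R by (apply pow_incr; lra).
  assert (Rabs y ^ 4 <= Rabs y ^ 3)%R. { change (Rabs y ^ 4)%R with (Rabs y * Rabs y ^ 3)%R.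
    assert (0 <= Rabs y ^ 3)%R by (apply pow_le; lra). nra. }
  lra.
Qed.

Lemma Cexp_Q2 : Q2 Cexp 1 1 (/2).
Proof.
  assert (HP : Bnd (fun w => 1 + Xf w + Xf w * Xf w / 2)).
  { unfold Cdiv. repeat apply Bnd_add; repeat apply Bnd_mul; try apply Bnd_const; apply Bnd_X. }
  assert (HQ : Bnd (fun w => 1 + Ci * Yf w - Yf w * Yf w / 2)).
  { unfold Cminus, Cdiv. apply Bnd_add; [apply Bnd_add; [apply Bnd_const|apply Bnd_mul; [apply Bnd_const|apply Bnd_Y]]|].
    assert (B2 : Bnd (fun w => (-1) * (Yf w * Yf w * / 2))).
    { apply (Bnd_mul (fun _ => -1) (fun w => Yf w * Yf w * / 2)); [apply Bnd_const|].
      repeat apply Bnd_mul; try apply Bnd_const; apply Bnd_Y. }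
    destruct B2 as [K [d [Hd HB]]]. exists K, d. split; auto. intros z Hz Hzd.
    replace (- (Yf z * Yf z * / 2)) with ((-1) * (Yf z * Yf z * / 2)) by ring. auto. }
  pose proof (Ord_mul _ _ _ _ _ Ord_exp_re Ord_cis (Bnd_Ord _ _ _ Ord_exp_re HP) HQ) as H.
  unfold Q2. eapply Ord_trans.
  { eapply Ord_ext1; [|reflexivity|apply H]. intros w. symmetry. apply Cexp_split. }
  exists 2%R, 1%R. split; [lra|split; [lra|]]. intros z _ Hz.
  unfold P2f, Xf, Yf.
  pose proof (Cmod_ge_0 z). pose proof (re_le z). pose proof (im_le z).
  set (m := Cmod z) in *.
  set (x := Re z) in *. set (y := Im z) in *.
  rewrite (C_decomp z). fold x y.
  replace ((1 + RtoC x + RtoC x * RtoC x / 2) * (1 + Ci * RtoC y - RtoC y * RtoC y / 2) -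
    (1 + 1 * (RtoC x + Ci * RtoC y) + / 2 * (RtoC x + Ci * RtoC y) * (RtoC x + Ci * RtoC y))) with
    ((- (x * y * y / 2) - x * x * y * y / 4, x * x * y / 2)%R : C).
  2:{ unfold Ci, RtoC, Cminus, Cplus, Cmult, Copp, Cdiv, Cinv. simpl. f_equal; field. }
  eapply Rle_trans; [apply Cmod_pair_le|].
  pose proof (Rabs_pos x). pose proof (Rabs_pos y).
  assert (P3 : forall a b c, (0 <= a <= m -> 0 <= b <= m -> 0 <= c <= m -> a * b * c <= m * m * m)%R).
  { intros a b c Ha Hb Hc. apply Rmult_le_compat; try apply Rmult_le_pos; try apply Rmult_le_compat; lra. }
  assert (P4 : forall a b c e, (0 <= a <= m -> 0 <= b <= m -> 0 <= c <= m -> 0 <= e <= m -> a * b * c * e <= m * m * m * m)%R).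
  { intros a b c e Ha Hb Hc He. apply Rmult_le_compat; try apply Rmult_le_pos; try apply Rmult_le_pos; try lra.
    apply P3; lra. }
  assert (A1 : (Rabs (- (x * y * y / 2) - x * x * y * y / 4) <= m * m * m / 2 + m * m * m * m / 4)%R).
  { unfold Rminus. eapply Rle_trans; [apply Rabs_triang|]. rewrite !Rabs_Ropp.
    unfold Rdiv. rewrite !Rabs_mult. rewrite ?(Rabs_pos_eq (/2)), ?(Rabs_pos_eq (/4)) by lra.
    pose proof (P3 (Rabs x) (Rabs y) (Rabs y) ltac:(lra) ltac:(lra) ltac:(lra)).
    pose proof (P4 (Rabs x) (Rabs x) (Rabs y) (Rabs y) ltac:(lra) ltac:(lra) ltac:(lra) ltac:(lra)).
    lra. }
  assert (A2 : (Rabs (x * x * y / 2) <= m * m * m / 2)%R).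
  { unfold Rdiv. rewrite !Rabs_mult. rewrite ?(Rabs_pos_eq (/2)) by lra.
    pose proof (P3 (Rabs x) (Rabs x) (Rabs y) ltac:(lra) ltac:(lra) ltac:(lra)). lra. }
  assert (m * m * m * m <= m * m * m)%R. { assert (0 <= m * m * m)%R by (repeat apply Rmult_le_pos; lra). nra. }
  simpl. replace (m * (m * (m * 1)))%R with (m * m * m)%R by ring. assert (0 <= m * m * m)%R by (repeat apply Rmult_le_pos; lra). lra.
Qed.

Open Scope C_scope.

Lemma Ord_exact_loc n F G Q d0 : (0 < d0)%R ->
  (forall z : C, z <> 0 -> (Cmod z < d0)%R -> F z - G z = z ^ n * Q z) -> Bnd Q -> Ord n F G.
Proof.
  intros Hd0 HE [B [e [He HB]]]. exists (Rmax B 0), (Rmin e d0). split; [apply Rmax_r|split; [apply Rmin_pos; lra|]].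
  intros z Hz Hzd. pose proof (Rmin_l e d0). pose proof (Rmin_r e d0).
  rewrite HE by (auto; lra). rewrite Cmod_mult, Cmod_pow.
  specialize (HB z Hz ltac:(lra)). assert (Cmod (Q z) <= Rmax B 0)%R by (eapply Rle_trans; [apply HB|apply Rmax_l]).
  assert (0 <= Cmod z ^ n)%R by (apply pow_le; apply Cmod_ge_0).
  rewrite Rmult_comm. apply Rmult_le_compat_r; auto.
Qed.

Lemma Bnd_ext F G : (forall z, F z = G z) -> Bnd G -> Bnd F.
Proof. intros E [K [d [Hd H]]]. exists K, d. split; auto. intros z Hz Hzd. rewrite E. auto. Qed.

Lemma Dcheb_bound (t : R) (w : C) : (0 < t < 1)%R -> (Cmod w < /8)%R ->
  (/2 <= Cmod (1 - 2 * RtoC t * w + w * w))%R.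
Proof.
  intros Ht Hw. pose proof (Cmod_le_sub 1 (1 - 2 * RtoC t * w + w * w)) as H.
  replace (1 - (1 - 2 * RtoC t * w + w * w)) with (2 * RtoC t * w - w * w) in H by ring.
  rewrite Cmod_1 in H. pose proof (Cmod_sub_le (2 * RtoC t * w) (w * w)).
  assert (E2 : Cmod 2 = 2%R) by (rewrite Cmod_R, Rabs_pos_eq; lra).
  assert (Et : Cmod (RtoC t) = t) by (rewrite Cmod_R, Rabs_pos_eq; lra).
  rewrite !Cmod_mult, E2, Et in H0.
  pose proof (Cmod_ge_0 w). nra.
Qed.

Lemma Hcheb_Q2 (t : R) : (0 < t < 1)%R -> Q2 (Hcheb t) 1 (2 * RtoC t) (4 * RtoC t * RtoC t - 1).
Proof.
  intros Ht. unfold Q2, Hcheb.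
  apply (Ord_exact_loc _ _ _ (fun w => - (4 * RtoC t - 8 * RtoC t * RtoC t * RtoC t + (4 * RtoC t * RtoC t - 1) * w) * / (1 - 2 * RtoC t * w + w * w)) (/8)%R); [lra| |].
  - intros z Hz Hzd. assert (HD : 1 - 2 * RtoC t * z + z * z <> 0).
    { intro E. pose proof (Dcheb_bound t z Ht Hzd). rewrite E, Cmod_0 in H. lra. }
    unfold P2f. simpl. field. auto.
  - apply Bnd_mul.
    + apply (Bnd_ext _ (fun w => (-1) * (4 * RtoC t - 8 * RtoC t * RtoC t * RtoC t + (4 * RtoC t * RtoC t - 1) * w))).
      { intros; ring. }
      repeat apply Bnd_mul; repeat apply Bnd_add; repeat apply Bnd_mul; try apply Bnd_const; try apply Bnd_id.
    + exists 2%R, (/8)%R. split; [lra|]. intros z Hz Hzd.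
      pose proof (Dcheb_bound t z Ht Hzd).
      assert (HD : 1 - 2 * RtoC t * z + z * z <> 0) by (intro E; rewrite E, Cmod_0 in H; lra).
      rewrite Cmod_inv by auto. apply Rle_trans with (/ / 2)%R; [apply Rinv_le_contravar; lra|right; field].
Qed.

Lemma Hcheb0 (t : R) : Hcheb t 0 = 1.
Proof. unfold Hcheb. replace (1 - 2 * RtoC t * 0 + 0 * 0) with (RtoC 1) by ring. unfold RtoC, Cinv. simpl. f_equal; field. Qed.

Open Scope C_scope.

Ltac Ceq := match goal with |- ?a = ?b => change (a = b :> C) end.

Definition ee (th : R) : C := (cos th, sin th).

Lemma ee_mul a b : ee a * ee b = ee (a + b).
Proof. unfold ee, Cmult. simpl. rewrite cos_plus, sin_plus. f_equal; ring. Qed.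

Lemma ee_0 : ee 0 = 1.
Proof. unfold ee. rewrite cos_0, sin_0. reflexivity. Qed.

Lemma ee_pow th k : ee th ^ k = ee (INR k * th).
Proof.
  induction k.
  - simpl. rewrite Rmult_0_l, ee_0. reflexivity.
  - simpl Cpow. rewrite IHk, ee_mul. f_equal. rewrite S_INR. ring.
Qed.

Lemma Cmod_ee th : Cmod (ee th) = 1%R.
Proof.
  unfold Cmod, ee. simpl. replace (cos th * (cos th * 1) + sin th * (sin th * 1))%R with 1%R.
  apply sqrt_1. pose proof (sin2_cos2 th). unfold Rsqr in H. lra.
Qed.

Lemma ee_conj th : Cconj (ee th) * ee th = 1.
Proof.
  unfold Cconj, ee, Cmult. simpl. pose proof (sin2_cos2 th). unfold Rsqr in H.
  unfold RtoC. f_equal; lra.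
Qed.

Lemma ee_ne1 th : (0 < th < 2 * PI)%R -> ee th <> 1.
Proof.
  intros Hth E. unfold ee in E. injection E as E1 E2.
  destruct (Rtotal_order th PI) as [H|[H|H]].
  - pose proof (sin_gt_0 th ltac:(lra) H). lra.
  - subst th. rewrite cos_PI in E1. lra.
  - pose proof (sin_lt_0 th H ltac:(lra)). lra.
Qed.

Lemma Cconj_ne1 (x : C) : Cconj x <> 1 -> x <> 1.
Proof. intros H E. apply H. rewrite E. unfold Cconj, RtoC. simpl. f_equal. ring. Qed.

Lemma geom_C (u : C) K : (u - 1) * sum_n (fun k => u ^ k) K = u ^ (S K) - 1.
Proof.
  induction K.
  - rewrite sum_O. simpl. Ceq. ring.
  - rewrite sum_Sn. change (plus (sum_n (fun k => u ^ k) K) (u ^ S K)) with (sum_n (fun k => u ^ k) K + u ^ S K).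
    rewrite Cmult_plus_distr_l, IHK. simpl. ring.
Qed.

Lemma sum_n_C_const (x : C) K : sum_n (fun _ => x) K = RtoC (INR (S K)) * x.
Proof.
  induction K.
  - rewrite sum_O. simpl. Ceq. ring.
  - rewrite sum_Sn. change (plus (sum_n (fun _ => x) K) x) with (sum_n (fun _ : nat => x) K + x).
    rewrite IHK. rewrite (S_INR (S K)), RtoC_plus. Ceq. ring.
Qed.

Lemma sum_n_single (T : nat -> C) n K : (n <= K)%nat -> (forall m, (m <= K)%nat -> m <> n -> T m = 0) ->
  sum_n T K = T n.
Proof.
  intros Hn H. induction K.
  - rewrite sum_O. f_equal. lia.
  - rewrite sum_Sn. change (plus (sum_n T K) (T (S K))) with (sum_n T K + T (S K)).
    destruct (Nat.eq_dec n (S K)) as [->|Hne].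
    + rewrite (sum_n_ext_loc T (fun _ => RtoC 0) K).
      * assert (E : sum_n (fun _ : nat => RtoC 0) K = RtoC 0) by (rewrite sum_n_C_const; Ceq; ring). rewrite E. Ceq. ring.
      * intros m Hm. apply H; lia.
    + rewrite IHK by (try lia; intros; apply H; lia). rewrite (H (S K)) by lia. Ceq. ring.
Qed.

Lemma is_series_sum_n (F : nat -> nat -> C) (L : nat -> C) K : (forall k, is_series (F k) (L k)) ->
  is_series (fun m => sum_n (fun k => F k m) K) (sum_n L K).
Proof.
  intros H. induction K.
  - rewrite sum_O. eapply is_series_ext; [|apply (H 0%nat)]. intros. rewrite sum_O. reflexivity.
  - rewrite sum_Sn. eapply is_series_ext; [|apply (is_series_plus _ _ _ _ IHK (H (S K)))].
    intros m. rewrite sum_Sn. reflexivity.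
Qed.

Lemma Cconj_ne1' (x : C) : x <> 1 -> Cconj x <> 1.
Proof. intros H E. apply H. rewrite <- (Cconj_conj x), E. unfold Cconj, RtoC. simpl. f_equal. ring. Qed.

Lemma C_sub_add (a b : C) : a = (a - b) + b.
Proof. ring. Qed.

Lemma Cconj_1 : Cconj 1 = 1.
Proof. unfold Cconj, RtoC. simpl. f_equal. ring. Qed.

Lemma core_avg (om : C -> C) c n K (r M q : R) :
  taylor_on_U om c -> (forall z, inU z -> (Cmod (om z) < 1)%R) -> (0 < r < 1)%R -> (n <= K)%nat ->
  (0 <= M)%R -> (0 <= q < 1)%R -> (forall m, (Cmod (c m) * r ^ m <= M * q ^ m)%R) ->
  (Cmod (c n) * r ^ n <= 1 + M * q ^ (S K) / (1 - q))%R.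
Proof.
  intros Ht Hom Hr HnK HM Hq Hcb.
  set (N := S K).
  assert (HN : (0 < INR N)%R) by (apply lt_0_INR; unfold N; lia).
  set (th := (2 * PI / INR N)%R).
  set (zeta := ee th). set (kap := Cconj zeta ^ n).
  assert (Hz1 : Cmod zeta = 1%R) by apply Cmod_ee.
  assert (HzN : zeta ^ N = 1).
  { unfold zeta. rewrite ee_pow. unfold th. replace (INR N * (2 * PI / INR N))%R with (2 * PI)%R by (field; lra).
    unfold ee. rewrite cos_2PI, sin_2PI. reflexivity. }
  assert (Hzj : forall j, (0 < j < N)%nat -> zeta ^ j <> 1).
  { intros j Hj. unfold zeta. rewrite ee_pow. apply ee_ne1.
    assert (0 < INR j)%R by (apply lt_0_INR; lia). assert (INR j < INR N)%R by (apply lt_INR; lia).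
    pose proof PI_RGT_0. unfold th. split.
    - apply Rmult_lt_0_compat; auto. apply Rdiv_lt_0_compat; lra.
    - apply (Rmult_lt_reg_r (INR N)); auto. unfold Rdiv. field_simplify; [|lra]. nra. }
  assert (Hzc : zeta * Cconj zeta = 1) by (rewrite Cmult_comm; apply ee_conj).
  assert (Hkap : Cmod kap = 1%R) by (unfold kap; rewrite Cmod_pow, Cmod_conj, Hz1; apply pow1).
  set (F := fun k m => kap ^ k * (c m * (RtoC r * zeta ^ k) ^ m)).
  set (L := fun k => kap ^ k * om (RtoC r * zeta ^ k)).
  assert (HFL : forall k, is_series (F k) (L k)).
  { intros k. apply is_series_Cscal. apply Ht. unfold inU. rewrite Cmod_mult, Cmod_pow, Hz1, pow1, Cmod_R, Rabs_pos_eq; lra. }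
  pose proof (is_series_sum_n F L K HFL) as HS.
  set (G := fun m => sum_n (fun k => (zeta ^ m * kap) ^ k) K).
  set (T := fun m => c m * RtoC r ^ m * G m).
  assert (HT : is_series T (sum_n L K)).
  { eapply is_series_ext; [|apply HS]. intros m. unfold T, G, F.
    transitivity (sum_n (fun k => mult (c m * RtoC r ^ m) ((zeta ^ m * kap) ^ k)) K).
    - apply sum_n_ext. intros k. change (mult ?a ?b) with (a * b).
      rewrite !Cpow_mult_l, <- !Cpow_mult_r, Nat.mul_comm. Ceq. ring.
    - rewrite sum_n_mult_l. reflexivity. }
  assert (HSb : (Cmod (sum_n L K) <= INR N)%R).
  { change (Cmod (sum_n L K)) with (norm (sum_n L K)).
    eapply Rle_trans; [apply (sum_n_norm_le L (fun _ => 1%R))|].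
    - intros k. change (norm ?x) with (Cmod x). unfold L. rewrite Cmod_mult, Cmod_pow, Hkap, pow1, Rmult_1_l.
      left. apply Hom. unfold inU. rewrite Cmod_mult, Cmod_pow, Hz1, pow1, Cmod_R, Rabs_pos_eq; lra.
    - rewrite sum_n_const. unfold N. lra. }
  assert (HGn : G n = RtoC (INR N)).
  { unfold G, kap. rewrite <- Cpow_mult_l, Hzc, Cpow_1_l.
    rewrite (sum_n_ext (fun k => RtoC 1 ^ k) (fun _ => RtoC 1)) by (intros; apply Cpow_1_l).
    rewrite sum_n_C_const. unfold N. Ceq. ring. }
  assert (HG0 : forall m, (m <= K)%nat -> m <> n -> G m = RtoC 0).
  { intros m Hm Hmn. set (u := zeta ^ m * kap).
    assert (HuN : u ^ N = 1).
    { unfold u, kap. rewrite Cpow_mult_l, <- !Cpow_mult_r, (Nat.mul_comm m N), (Nat.mul_comm n N), !Cpow_mult_r.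
      rewrite HzN, <- Cpow_conj, HzN, Cconj_1, !Cpow_1_l. ring. }
    assert (Hu1 : u <> 1).
    { destruct (Compare_dec.lt_dec n m) as [Hlt|Hge].
      - assert (E : u = zeta ^ (m - n)).
        { unfold u, kap.
          assert (E2 : zeta ^ m = zeta ^ (m - n) * zeta ^ n) by (rewrite <- Cpow_add_r; f_equal; lia).
          rewrite E2.
          rewrite <- Cmult_assoc, <- Cpow_mult_l, Hzc, Cpow_1_l. ring. }
        rewrite E. apply Hzj. unfold N; lia.
      - assert (E : u = Cconj (zeta ^ (n - m))).
        { unfold u, kap. rewrite Cpow_conj.
          assert (E2 : Cconj zeta ^ n = Cconj zeta ^ (n - m) * Cconj zeta ^ m) by (rewrite <- Cpow_add_r; f_equal; lia).
          rewrite E2.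
          rewrite (Cmult_comm (Cconj zeta ^ (n - m))), Cmult_assoc, <- Cpow_mult_l, Hzc, Cpow_1_l. ring. }
        rewrite E. apply Cconj_ne1'. apply Hzj. unfold N; lia. }
    pose proof (geom_C u K) as Hg. fold N in Hg. rewrite HuN in Hg.
    replace (1 - 1) with (RtoC 0) in Hg by ring.
    unfold G. fold u.
    assert (Hu0 : u - 1 <> 0). { intro E. apply Hu1. apply Csub0. exact E. }
    replace (sum_n (fun k => u ^ k) K) with (/ (u - 1) * ((u - 1) * sum_n (fun k => u ^ k) K)) by (field; auto).
    rewrite Hg. Ceq. ring. }
  assert (HGb : forall m, (Cmod (G m) <= INR N)%R).
  { intros m. unfold G.
    pose proof (@sum_n_norm_le C_AbsRing C_NormedModule (fun k => (zeta ^ m * kap) ^ k) (fun _ => 1%R)) as SN.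
    assert (Hb : forall k, (norm ((zeta ^ m * kap) ^ k)%C <= 1)%R).
    { intros k. change (norm ?x) with (Cmod x). rewrite Cmod_pow, Cmod_mult, Cmod_pow, Hz1, pow1, Hkap, Rmult_1_l, pow1. lra. }
    specialize (SN Hb K). rewrite sum_n_const in SN. unfold N. rewrite Rmult_1_r in SN. exact SN. }
  assert (Hpart : sum_n T K = T n).
  { apply sum_n_single; auto. intros m Hm Hmn. unfold T. rewrite HG0 by auto. Ceq. ring. }
  set (SS := sum_n L K).
  set (l := SS - sum_n T K).
  assert (H1 : is_series T (plus l (sum_n T K))).
  { replace (plus l (sum_n T K)) with SS; auto. change (SS = l + sum_n T K). unfold l. apply C_sub_add. }
  apply (is_series_incr_n T (S K) l ltac:(lia)) in H1.
  assert (H2 := geom_scaled (INR N * M * q ^ N) q Hq).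
  pose proof (series_norm_le _ _ _ _ H1 H2) as HH.
  assert (HB : forall k, (norm (T (S K + k)%nat) <= INR N * M * q ^ N * q ^ k)%R).
  { intros k. change (norm ?x) with (Cmod x). unfold T. rewrite !Cmod_mult, Cmod_pow, Cmod_R, Rabs_pos_eq by lra.
    pose proof (Hcb (S K + k)%nat).
    pose proof (HGb (S K + k)%nat).
    assert (0 <= Cmod (c (S K + k)%nat) * r ^ (S K + k))%R by (apply Rmult_le_pos; [apply Cmod_ge_0|apply pow_le; lra]).
    eapply Rle_trans. { apply Rmult_le_compat; [auto|apply Cmod_ge_0|apply H|apply H0]. }
    right. unfold N. rewrite pow_add. ring. }
  specialize (HH HB). change (norm l) with (Cmod l) in HH.
  assert (ET : T n = SS - l) by (unfold l; rewrite Hpart; ring).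
  pose proof (Cmod_sub_le SS l) as Htri. rewrite <- ET in Htri.
  unfold T in Htri. rewrite HGn, !Cmod_mult, Cmod_pow, !Cmod_R, !Rabs_pos_eq in Htri by lra.
  fold N in Htri.
  assert (Hfin : (Cmod (c n) * r ^ n * INR N <= INR N * (1 + M * q ^ S K / (1 - q)))%R).
  { fold N. eapply Rle_trans; [apply Htri|]. unfold Rdiv in *. fold SS in HSb. nra. }
  apply (Rmult_le_reg_r (INR N)); auto. rewrite (Rmult_comm (1 + _)). exact Hfin.
Qed.

Lemma bernoulli (r : R) n : (0 <= r)%R -> (1 - INR n * (1 - r) <= r ^ n)%R.
Proof.
  intros Hr. induction n.
  - simpl. lra.
  - rewrite S_INR. simpl pow. pose proof (pos_INR n).
    assert (r * (1 - INR n * (1 - r)) <= r * r ^ n)%R by (apply Rmult_le_compat_l; auto).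
    assert (0 <= INR n * ((1 - r) * (1 - r)))%R by (apply Rmult_le_pos; [lra|apply Rle_0_sqr]). nra.
Qed.

Lemma coef_le1 (om : C -> C) c n : taylor_on_U om c -> (forall z, inU z -> (Cmod (om z) < 1)%R) ->
  (Cmod (c n) <= 1)%R.
Proof.
  intros Ht Hom.
  assert (HA : forall r, (0 < r < 1)%R -> (Cmod (c n) * r ^ n <= 1)%R).
  { intros r Hr. set (rho := ((1 + r) / 2)%R).
    destruct (coef_bound om c rho Ht ltac:(unfold rho; lra)) as [M [HM HMb]].
    set (q := (r / rho)%R).
    assert (Hq : (0 <= q < 1)%R). { unfold q, rho. split. apply Rmult_le_pos; [lra|]. apply Rlt_le, Rinv_0_lt_compat; lra.
      apply (Rmult_lt_reg_r ((1 + r) / 2)); [lra|]. unfold Rdiv. field_simplify; lra. }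
    assert (Hcb : forall m, (Cmod (c m) * r ^ m <= M * q ^ m)%R).
    { intros m. assert (E : (r ^ m = rho ^ m * q ^ m)%R).
      { rewrite <- Rpow_mult_distr. f_equal. unfold q. field. unfold rho; lra. }
      rewrite E, <- Rmult_assoc. apply Rmult_le_compat_r; [apply pow_le; lra|apply HMb]. }
    destruct (Rle_dec (Cmod (c n) * r ^ n) 1) as [Hle|Hgt]; auto. exfalso.
    assert (H0 : (Cmod (c n) * r ^ n - 1 = 0)%R).
    { apply (small_zero _ (M / (1 - q)) 1); [lra|lra|].
      intros e He.
      destruct (pow_lt_1_zero q ltac:(rewrite Rabs_pos_eq; lra) e ltac:(lra)) as [N0 HN0].
      set (K := Nat.max n N0).
      pose proof (core_avg om c n K r M q Ht Hom Hr ltac:(unfold K; lia) HM Hq Hcb) as Hc.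
      specialize (HN0 (S K) ltac:(unfold K; lia)). rewrite Rabs_pos_eq in HN0 by (apply pow_le; lra).
      assert (M * q ^ S K / (1 - q) <= M / (1 - q) * e)%R.
      { unfold Rdiv. assert (0 <= / (1 - q))%R by (apply Rlt_le, Rinv_0_lt_compat; lra).
        replace (M * q ^ S K * / (1 - q))%R with ((M * / (1 - q)) * q ^ S K)%R by ring.
        apply Rmult_le_compat_l; [apply Rmult_le_pos|]; lra. }
      lra. }
    lra. }
  destruct (Rle_dec (Cmod (c n)) 1) as [Hle|Hgt]; auto. exfalso.
  assert (H0 : (Cmod (c n) - 1 = 0)%R).
  { apply (small_zero _ (Cmod (c n) * INR n) 1); [lra|lra|].
    intros x Hx. pose proof (HA (1 - x)%R ltac:(lra)). pose proof (bernoulli (1 - x) n ltac:(lra)).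
    replace (1 - (1 - x))%R with x in H0 by ring.
    assert (Cmod (c n) * (1 - INR n * x) <= Cmod (c n) * (1 - x) ^ n)%R by (apply Rmult_le_compat_l; [apply Cmod_ge_0|auto]).
    nra. }
  lra.
Qed.

Open Scope C_scope.

Lemma Q3_divz F p1 p2 p3 : Q3 F 0 p1 p2 p3 -> Q2 (fun z => F z / z) p1 p2 p3.
Proof.
  intros [K [d [HK [Hd H]]]]. exists K, d. split; auto. split; auto. intros z Hz Hzd.
  specialize (H z Hz Hzd). unfold P3f in H. unfold P2f.
  replace (F z / z - (p1 + p2 * z + p3 * z * z)) with ((F z - (0 + p1 * z + p2 * z * z + p3 * z * z * z)) / z) by (field; auto).
  rewrite Cmod_div by auto. assert (0 < Cmod z)%R by (apply Cmod_gt_0; auto).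
  apply (Rmult_le_reg_r (Cmod z)); auto. unfold Rdiv. rewrite Rmult_assoc, Rinv_l by lra. simpl in *. nra.
Qed.

Lemma Cexp0 : Cexp 0 = 1.
Proof. unfold Cexp. simpl. rewrite exp_0, cos_0, sin_0. unfold RtoC. f_equal; ring. Qed.

Lemma INR_C1 : RtoC (INR 1) = 1. Proof. reflexivity. Qed.
Lemma INR_C2 : RtoC (INR 2) = 2. Proof. simpl. unfold RtoC. f_equal; ring. Qed.
Lemma INR_C3 : RtoC (INR 3) = 3. Proof. simpl. unfold RtoC. f_equal; ring. Qed.

Lemma taylor_SerOn h c r : (0 < r <= 1)%R -> taylor_on_U h c -> SerOn h c r.
Proof. intros Hr Ht z Hz. apply Ht. unfold inU. lra. Qed.

Lemma series_setup h c : taylor_on_U h c -> exists M, CoefB c M 2 /\ SerOn h c (/16).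
Proof.
  intros Ht. destruct (coef_bound2 h c Ht) as [M [HM H]]. exists M. split.
  - split; [auto|split; [lra|auto]].
  - apply taylor_SerOn; auto. lra.
Qed.

Lemma Q2_coef F p0 p1 p2 q0 q1 q2 : p0 = q0 -> p1 = q1 -> p2 = q2 -> Q2 F p0 p1 p2 -> Q2 F q0 q1 q2.
Proof. intros -> -> ->. auto. Qed.

Lemma subord_coefs (lam mu del t : R) (h : C -> C) (a : nat -> C) :
  (1/2 < t < 1)%R -> taylor_on_U h a -> a 0%nat = 0 -> a 1%nat = 1 -> op_subord lam mu del t h ->
  exists c1 c2 : C, (Cmod c1 <= 1)%R /\ (Cmod c2 <= 1)%R /\
   (RtoC lam + RtoC mu + 2 * RtoC (xi lam mu) * RtoC del) * a 2%nat = 2 * RtoC t * c1 /\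
   (2 * RtoC lam + RtoC mu + 6 * RtoC (xi lam mu) * RtoC del) * a 3%nat
     + (RtoC mu - 1) * (RtoC mu + 2 * RtoC lam) / 2 * a 2%nat * a 2%nat
     = 2 * RtoC t * c2 + (4 * RtoC t * RtoC t - 1) * c1 * c1.
Proof.
  intros Ht Hh Ha0 Ha1 [L [h1 [h2 [HL [HL0 [HLe [Hder Hsub]]]]]]].
  destruct (series_setup h a Hh) as [M [HcB HsO]].
  assert (Hd1 : SerOn h1 (dcoef a) (/16)).
  { apply (deriv_coef h h1 a M 2 (/16)); auto; try lra.
    intros z Hz. apply (proj1 (Hder z ltac:(unfold inU; lra))). }
  pose proof (CoefB_d a M 2 HcB) as HcB1.
  assert (Hd2 : SerOn h2 (dcoef (dcoef a)) (/32)).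
  { apply (deriv_coef h1 h2 (dcoef a) (M * 2) (2 * 2) (/32)); auto; try lra.
    apply SerOn_shrink with (/16)%R; auto; lra.
    intros z Hz. apply (proj2 (Hder z ltac:(unfold inU; lra))). }
  pose proof (CoefB_d _ _ _ HcB1) as HcB2.
  pose proof (ser_Q3 h a M 2 (/16) HcB ltac:(lra) ltac:(lra) HsO) as QH3.
  pose proof (ser_Q2 h1 (dcoef a) (M * 2) (2 * 2) (/32) HcB1 ltac:(lra) ltac:(lra) (SerOn_shrink h1 _ (/16) (/32) ltac:(lra) Hd1)) as QH1.
  pose proof (ser_Q2 h2 (dcoef (dcoef a)) (M * 2 * (2 * 2)) (2 * (2 * 2)) (/64) HcB2 ltac:(lra) ltac:(lra) (SerOn_shrink h2 _ (/32) (/64) ltac:(lra) Hd2)) as QH2.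
  destruct HL as [l Hl]. destruct (series_setup L l Hl) as [ML [HlB HlS]].
  pose proof (ser_Q2 L l ML 2 (/16) HlB ltac:(lra) ltac:(lra) HlS) as QL.
  assert (Hl0 : l 0%nat = 0) by (rewrite <- (ser_at0 L l ML 2 (/16) HlB ltac:(lra) ltac:(lra) HlS); auto).
  rewrite Hl0 in QL. rewrite Ha0, Ha1 in QH3.
  pose proof (Q3_divz _ _ _ _ QH3) as QHz.
  pose proof (Q2_comp Cexp L _ _ _ _ _ Cexp_Q2 Cexp0 QL) as QE.
  assert (QE' : Q2 (fun z => h z / z) 1 (1 * l 1%nat) (1 * l 2%nat + / 2 * l 1%nat * l 1%nat)).
  { eapply (Ord_ext 3 (fun z => Cexp (L z)) (fun z => h z / z) _ _ 1%R); [lra| |exact QE].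
    intros z Hz Hzd. split; auto. }
  destruct (Q2_unique _ _ _ _ _ _ _ QHz QE') as [_ [El1 El2]].
  assert (QLm : Q2 (fun z => RtoC mu * L z) 0 (RtoC mu * l 1%nat) (RtoC mu * l 2%nat)).
  { eapply Q2_coef; [| reflexivity| reflexivity| apply (Q2_scal (RtoC mu) _ _ _ _ QL)]. ring. }
  assert (QLn : Q2 (fun z => (RtoC mu - 1) * L z) 0 ((RtoC mu - 1) * l 1%nat) ((RtoC mu - 1) * l 2%nat)).
  { eapply Q2_coef; [| reflexivity| reflexivity| apply (Q2_scal (RtoC mu - 1) _ _ _ _ QL)]. ring. }
  pose proof (Q2_comp Cexp _ _ _ _ _ _ Cexp_Q2 Cexp0 QLm) as QE1.
  pose proof (Q2_comp Cexp _ _ _ _ _ _ Cexp_Q2 Cexp0 QLn) as QE2.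
  pose proof (Q2_add _ _ _ _ _ _ _ _ (Q2_add _ _ _ _ _ _ _ _ (Q2_scal (1 - RtoC lam) _ _ _ _ QE1)
     (Q2_mul _ _ _ _ _ _ _ _ (Q2_scal (RtoC lam) _ _ _ _ QH1) QE2))
     (Q2_mul _ _ _ _ _ _ _ _ (Q2_scal (RtoC (xi lam mu) * RtoC del) _ _ _ _ Q2_id) QH2)) as QF.
  destruct Hsub as [om [[w Hw] [Hom0 [HomU Heq]]]].
  destruct (series_setup om w Hw) as [Mw [HwB HwS]].
  pose proof (ser_Q2 om w Mw 2 (/16) HwB ltac:(lra) ltac:(lra) HwS) as QW.
  assert (Hw0 : w 0%nat = 0) by (rewrite <- (ser_at0 om w Mw 2 (/16) HwB ltac:(lra) ltac:(lra) HwS); auto).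
  rewrite Hw0 in QW.
  pose proof (Q2_comp (Hcheb t) om _ _ _ _ _ (Hcheb_Q2 t ltac:(lra)) (Hcheb0 t) QW) as QC.
  assert (QF' : Q2 (fun z => (1 - RtoC lam) * Cexp (RtoC mu * L z) + RtoC lam * h1 z * Cexp ((RtoC mu - 1) * L z) +
       RtoC (xi lam mu) * RtoC del * z * h2 z) 1 (2 * RtoC t * w 1%nat)
       (2 * RtoC t * w 2%nat + (4 * RtoC t * RtoC t - 1) * w 1%nat * w 1%nat)).
  { eapply (Ord_ext 3 (fun z => Hcheb t (om z))); [| |exact QC]; [apply Rlt_0_1|].
    intros z Hz Hzd. split; auto. symmetry. apply Heq. unfold inU; auto. }
  destruct (Q2_unique _ _ _ _ _ _ _ QF QF') as [_ [EF1 EF2]].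
  exists (w 1%nat), (w 2%nat).
  split; [apply (coef_le1 om w 1 Hw); intros z Hz; apply HomU; auto|].
  split; [apply (coef_le1 om w 2 Hw); intros z Hz; apply HomU; auto|].
  unfold dcoef in EF1, EF2. rewrite ?INR_C1, ?INR_C2, ?INR_C3, Ha1 in EF1, EF2.
  assert (L1 : l 1%nat = a 2%nat) by (rewrite El1; ring).
  assert (L2 : l 2%nat = a 3%nat - / 2 * a 2%nat * a 2%nat) by (rewrite El2, L1; ring).
  rewrite L1 in EF1, EF2. rewrite L2 in EF2.
  assert (H2 : (2 : C) <> 0). { intro E. injection E as E. lra. }
  split.
  - rewrite <- EF1. ring.
  - rewrite <- EF2. field.
Qed.

Open Scope C_scope.

Lemma Q3_id : Q3 (fun z => z) 0 1 0 0.
Proof. apply Ord_exact with (Q := fun _ => 0). intros; unfold P3f; ring. apply Bnd_const. Qed.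

Lemma inverse_coefs f a g b : in_A f a -> univalent_U f -> local_inverse f g -> taylor_on_U g b ->
  b 0%nat = 0 /\ b 1%nat = 1 /\ b 2%nat = - a 2%nat /\ b 3%nat = 2 * a 2%nat * a 2%nat - a 3%nat.
Proof.
  intros [Hf [Ha0 Ha1]] Hu [r [Hr Hinv]] Hg.
  destruct (series_setup f a Hf) as [M [HcB HsO]].
  destruct (series_setup g b Hg) as [Mg [HgB HgS]].
  assert (Hf0 : f 0 = 0) by (rewrite (ser_at0 f a M 2 (/16) HcB ltac:(lra) ltac:(lra) HsO); auto).
  assert (Hg0 : g 0 = 0).
  { destruct (Hinv 0 ltac:(rewrite Cmod_0; lra)) as [H1 H2]. apply Hu; auto.
    unfold inU; rewrite Cmod_0; lra. rewrite H2, Hf0. reflexivity. }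
  assert (Hb0 : b 0%nat = 0) by (rewrite <- (ser_at0 g b Mg 2 (/16) HgB ltac:(lra) ltac:(lra) HgS); auto).
  pose proof (ser_Q3 f a M 2 (/16) HcB ltac:(lra) ltac:(lra) HsO) as QF.
  pose proof (ser_Q3 g b Mg 2 (/16) HgB ltac:(lra) ltac:(lra) HgS) as QG.
  rewrite Ha0, Ha1 in QF. rewrite Hb0 in QG.
  pose proof (Q3_comp f g _ _ _ _ _ _ _ QF Hf0 QG) as QC.
  assert (QC' : Q3 (fun w => f (g w)) 0 1 0 0).
  { eapply (Ord_ext 4 (fun z => z)); [| |exact Q3_id]; [exact Hr|].
    intros z Hz Hzd. split; auto. symmetry. apply (proj2 (Hinv z Hzd)). }
  destruct (Q3_unique _ _ _ _ _ _ _ _ _ QC QC') as [_ [E1 [E2 E3]]].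
  assert (B1 : b 1%nat = 1) by (rewrite <- E1; ring).
  rewrite B1 in E2, E3.
  assert (B2 : b 2%nat = - a 2%nat) by (apply Csub0; rewrite <- E2; ring).
  rewrite B2 in E3.
  repeat split; auto. apply Csub0. rewrite <- E3. ring.
Qed.

Open Scope C_scope.

Lemma RtoC_neq (x : R) : x <> 0%R -> RtoC x <> 0.
Proof. intros H E. apply H. injection E as E. exact E. Qed.

Lemma final_alg (lam mu del t : R) (a2 a3 c1 c2 d1 d2 : C) :
  (1 <= lam)%R -> (0 <= mu)%R -> (0 <= del)%R -> (1/2 < t < 1)%R ->
  (Cmod c1 <= 1)%R -> (Cmod c2 <= 1)%R -> (Cmod d1 <= 1)%R -> (Cmod d2 <= 1)%R ->
  (RtoC lam + RtoC mu + 2 * RtoC (xi lam mu) * RtoC del) * a2 = 2 * RtoC t * c1 ->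
  (2 * RtoC lam + RtoC mu + 6 * RtoC (xi lam mu) * RtoC del) * a3
     + (RtoC mu - 1) * (RtoC mu + 2 * RtoC lam) / 2 * a2 * a2
     = 2 * RtoC t * c2 + (4 * RtoC t * RtoC t - 1) * c1 * c1 ->
  (RtoC lam + RtoC mu + 2 * RtoC (xi lam mu) * RtoC del) * (- a2) = 2 * RtoC t * d1 ->
  (2 * RtoC lam + RtoC mu + 6 * RtoC (xi lam mu) * RtoC del) * (2 * a2 * a2 - a3)
     + (RtoC mu - 1) * (RtoC mu + 2 * RtoC lam) / 2 * (- a2) * (- a2)
     = 2 * RtoC t * d2 + (4 * RtoC t * RtoC t - 1) * d1 * d1 ->
  let A := (lam + mu + 2 * xi lam mu * del)%R in
  let D := (A ^ 2 - 2 * (2 * A ^ 2 - (2 * lam + mu) * (mu + 1)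
                          - 12 * xi lam mu * del) * t ^ 2)%R in
  (D <> 0%R ->
     (Cmod a2 <= 2 * t * sqrt (2 * t) / sqrt (Rabs D))%R) /\
  (Cmod a3 <= 4 * t ^ 2 / A ^ 2
                     + 2 * t / (2 * lam + mu + 6 * xi lam mu * del))%R.
Proof.
  intros Hl Hm Hd Ht Hc1 Hc2 Hd1 Hd2 E1 E2 E3 E4 A D.
  set (x := xi lam mu) in *.
  assert (Hx : (0 <= x)%R). { unfold x, xi. apply Rmult_le_pos; [lra|]. apply Rlt_le, Rinv_0_lt_compat. lra. }
  set (B := (2 * lam + mu + 6 * x * del)%R).
  assert (HA : (1 <= A)%R). { unfold A. assert (0 <= x * del)%R by (apply Rmult_le_pos; lra). lra. }
  assert (HB : (2 <= B)%R). { unfold B. assert (0 <= x * del)%R by (apply Rmult_le_pos; lra). lra. }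
  assert (EA : RtoC lam + RtoC mu + 2 * RtoC x * RtoC del = RtoC A).
  { unfold A. rewrite !RtoC_plus, !RtoC_mult. reflexivity. }
  assert (EB : 2 * RtoC lam + RtoC mu + 6 * RtoC x * RtoC del = RtoC B).
  { unfold B. rewrite !RtoC_plus, !RtoC_mult. reflexivity. }
  rewrite EA in E1, E3. rewrite EB in E2, E4.
  assert (Ht0 : RtoC t <> 0) by (apply RtoC_neq; lra).
  assert (HA0 : RtoC A <> 0) by (apply RtoC_neq; lra).
  assert (HB0 : RtoC B <> 0) by (apply RtoC_neq; lra).
  assert (H20 : (2 : C) <> 0) by (apply RtoC_neq; lra).
  assert (Ec1 : c1 = RtoC A * a2 / (2 * RtoC t)) by (rewrite E1; field; auto).
  assert (Ed1 : d1 = RtoC A * (- a2) / (2 * RtoC t)) by (rewrite E3; field; auto).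
  assert (Ec2 : c2 = (RtoC B * a3 + (RtoC mu - 1) * (RtoC mu + 2 * RtoC lam) / 2 * a2 * a2
                      - (4 * RtoC t * RtoC t - 1) * c1 * c1) / (2 * RtoC t)) by (rewrite E2; field; auto).
  assert (Ed2 : d2 = (RtoC B * (2 * a2 * a2 - a3) + (RtoC mu - 1) * (RtoC mu + 2 * RtoC lam) / 2 * (- a2) * (- a2)
                      - (4 * RtoC t * RtoC t - 1) * d1 * d1) / (2 * RtoC t)) by (rewrite E4; field; auto).
  assert (Ea3 : a3 = a2 * a2 + RtoC t * (c2 - d2) / RtoC B).
  { rewrite Ec2, Ed2, Ed1, Ec1. field. auto. }
  assert (Ea2 : a2 = 2 * RtoC t * c1 / RtoC A).
  { rewrite Ec1. field. auto. }
  assert (ED : a2 * a2 * RtoC D = 4 * RtoC t * RtoC t * RtoC t * (c2 + d2)).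
  { rewrite Ec2, Ed2, Ed1, Ec1. unfold D, A, B. fold x.
    repeat first [rewrite RtoC_plus | rewrite RtoC_minus | rewrite RtoC_mult | rewrite RtoC_pow]. field. auto. }
  assert (Hma : (Cmod a2 <= 2 * t / A)%R).
  { rewrite Ea2. rewrite Cmod_div by auto. rewrite !Cmod_mult, !Cmod_R, !Rabs_pos_eq by lra.
    unfold Rdiv. apply Rmult_le_compat_r; [apply Rlt_le, Rinv_0_lt_compat; lra|]. nra. }
  pose proof (Cmod_ge_0 a2) as Ha2.
  split.
  - intros HD0. assert (HDp : (0 < Rabs D)%R) by (apply Rabs_pos_lt; auto).
    assert (Hn : (Cmod a2 * Cmod a2 * Rabs D = 4 * t * t * t * Cmod (c2 + d2))%R).
    { rewrite <- Cmod_R, <- !Cmod_mult, ED. rewrite !Cmod_mult, !Cmod_R, !Rabs_pos_eq by lra. reflexivity. }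
    assert (Hcd : (Cmod (c2 + d2) <= 2)%R) by (eapply Rle_trans; [apply Cmod_triangle|lra]).
    assert (Hn2 : (Cmod a2 * Cmod a2 * Rabs D <= 8 * t * t * t)%R).
    { rewrite Hn. assert (0 <= 4 * t * t * t)%R by (repeat apply Rmult_le_pos; lra). nra. }
    set (s := sqrt (Rabs D)).
    assert (Hs : (0 < s)%R) by (apply sqrt_lt_R0; auto).
    assert (Hss : (s * s = Rabs D)%R) by (apply sqrt_sqrt; lra).
    set (u := sqrt (2 * t)).
    assert (Hu : (0 <= u)%R) by apply sqrt_pos.
    assert (Huu : (u * u = 2 * t)%R) by (apply sqrt_sqrt; lra).
    assert (Hfin : (Cmod a2 * s <= 2 * t * u)%R).
    { assert (0 <= 2 * t * u)%R by (apply Rmult_le_pos; lra).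
      assert (0 <= Cmod a2 * s)%R by (apply Rmult_le_pos; lra).
      assert ((Cmod a2 * s) * (Cmod a2 * s) <= (2 * t * u) * (2 * t * u))%R.
      { replace ((Cmod a2 * s) * (Cmod a2 * s))%R with (Cmod a2 * Cmod a2 * (s * s))%R by ring.
        replace ((2 * t * u) * (2 * t * u))%R with (4 * t * t * (u * u))%R by ring.
        rewrite Hss, Huu. lra. }
      nra. }
    unfold Rdiv. apply (Rmult_le_reg_r s); auto. rewrite Rmult_assoc, Rinv_l by lra. lra.
  - rewrite Ea3. eapply Rle_trans; [apply Cmod_triangle|].
    rewrite Cmod_div by auto. rewrite !Cmod_mult, !Cmod_R, !Rabs_pos_eq by lra.
    assert (Hcd : (Cmod (c2 - d2) <= 2)%R) by (eapply Rle_trans; [apply Cmod_sub_le|lra]).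
    assert (T1 : (Cmod a2 * Cmod a2 <= 4 * t ^ 2 / A ^ 2)%R).
    { replace (4 * t ^ 2 / A ^ 2)%R with ((2 * t / A) * (2 * t / A))%R by (field; lra).
      apply Rmult_le_compat; lra. }
    assert (T2 : (t * Cmod (c2 - d2) / B <= 2 * t / B)%R).
    { unfold Rdiv. apply Rmult_le_compat_r; [apply Rlt_le, Rinv_0_lt_compat; lra|]. nra. }
    lra.
Qed.

Theorem theorem1 (lam mu del t : R) (f : C -> C) (a : nat -> C) :
  (1 <= lam)%R -> (0 <= mu)%R -> (0 <= del)%R -> (1/2 < t < 1)%R ->
  in_A f a -> classB mu lam del t f ->
  let A := (lam + mu + 2 * xi lam mu * del)%R in
  let D := (A ^ 2 - 2 * (2 * A ^ 2 - (2 * lam + mu) * (mu + 1)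
                          - 12 * xi lam mu * del) * t ^ 2)%R in
  (D <> 0%R ->
     (Cmod (a 2%nat) <= 2 * t * sqrt (2 * t) / sqrt (Rabs D))%R) /\
  (Cmod (a 3%nat) <= 4 * t ^ 2 / A ^ 2
                     + 2 * t / (2 * lam + mu + 6 * xi lam mu * del))%R.
Proof.
  intros Hl Hm Hd Ht HA [[Huf _] [Hopf [g [Hloc [[b Hb] [Hug Hopg]]]]]].
  pose proof HA as [Hf [Ha0 Ha1]].
  destruct (inverse_coefs f a g b HA Huf Hloc Hb) as [Hb0 [Hb1 [Hb2 Hb3]]].
  destruct (subord_coefs lam mu del t f a Ht Hf Ha0 Ha1 Hopf) as [c1 [c2 [Hc1 [Hc2 [E1 E2]]]]].
  destruct (subord_coefs lam mu del t g b Ht Hb Hb0 Hb1 Hopg) as [d1 [d2 [Hd1 [Hd2 [E3 E4]]]]].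
  rewrite Hb2 in E3, E4. rewrite Hb3 in E4.
  exact (final_alg lam mu del t (a 2%nat) (a 3%nat) c1 c2 d1 d2 Hl Hm Hd Ht Hc1 Hc2 Hd1 Hd2 E1 E2 E3 E4).
Qed.
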